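(* Let $D_a$ and $D_b$ be braid diagrams that are identical outside a ball and differ inside it by one of the braid-like Reidemeister moves: inside the ball $D_a$ contains the inner tangle $T_a$ (a positive or negative one-crossing kink, a pair of oppositely signed crossings between two strands, or the six-crossing braid-like Reidemeister III tangle on three strands) and $D_b$ contains the corresponding crossingless inner tangle $T_b$ (trivial braid). Let $C(\cdot)$ be a cube-of-resolutions complex assignment, and for $C(D_a)$ let $d_{ij}$ denote the component of the differential that raises the outer cube grading $gr_{out}$ by $i$ and the inner cube grading $gr_{in}$ by $j$. Suppose: (a) with respect to the filtration $\mathcal{F}_{out}$ induced by the outer cube grading, $C(D_a)$ and $C(D_b)$ are filtered chain homotopy equivalent; (b) the homology $H_*(H_*(C(D_a),d_{00}),d_{01}^* )$ lies in a single inner cube grading $gr_{in}=c$. Then for all $k\ge 2$, $E_k(C(D_a))\{-c\}\cong E_k(C(D_b))$, where $E_k(\cdot)$ denotes the $k$-th page of the spectral sequence induced by the cube filtration, the isomorphism is graded with respect to the cube grading $gr_{cube}$, and $\{n\}$ denotes a shift by $n$ in the cube grading.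
   Context: An abstract cube of resolutions complex $C(D)$ for a diagram $D$ with crossings $c_1,\dots,c_k$ is a chain complex which is a direct sum over complete resolutions $S_{i_1\dots i_k}$ ($i_j\in\{0,1\}$, each crossing receiving its $0$- or $1$-resolution), graded by the cube grading $gr_{cube}(S_{i_1\dots i_k})=\sum_j i_j$, whose differential does not decrease the cube grading; $d=d_0+d_1+\cdots$ with $d_j$ raising the cube grading by $j$, and the cube filtration $\mathcal F_{cube}$ induces a spectral sequence $E_k(C(D))$. Given a tangle $T$ inside the diagram (the inner tangle) with complement $T_{out}$ (the outer tangle), the inner cube grading $gr_{in}$ is the sum of the resolution indices over crossings in $T$ and the outer cube grading $gr_{out}$ the sum over crossings outside $T$, so $gr_{in}+gr_{out}=gr_{cube}$; $\mathcal F_{in},\mathcal F_{out}$ are the induced filtrations. $d_{01}^*$ denotes the map induced by $d_{01}$ on $H_*(C(D_a),d_{00})$. *)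

(* Defs.v *)
From HB Require Import structures.
From mathcomp Require Import all_boot all_order all_algebra.
Set Implicit Arguments. Unset Strict Implicit. Unset Printing Implicit Defensive.
Import Order.TTheory GRing.Theory.
Local Open Scope ring_scope.

Section CubeComplexes.
Variable R : pzRingType.

(* A cube complex with [no] outer and [ni] inner crossings: an R-module V
   with a bigrading (gr_out, gr_in) given by a complete family of orthogonal
   linear projections p i j (bidegree (i,j), 0 <= i <= no, 0 <= j <= ni), and
   a differential d (d \o d = 0) that decreases neither gr_out nor gr_in. *)
Definition cube_complex (V : lmodType R) (no ni : nat)
    (p : nat -> nat -> {linear V -> V}) (d : {linear V -> V}) : Prop :=
  [/\ forall i j i' j' x,
        p i j (p i' j' x) = if (i == i') && (j == j') then p i j x else 0,
      forall x, x = \sum_(i < no.+1) \sum_(j < ni.+1) p i j x,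
      forall x, d (d x) = 0 &
      forall i j i' j' x, ~~ ((i <= i')%N && (j <= j')%N) ->
        p i' j' (d (p i j x)) = 0].

Definition Fout (V : lmodType R) (p : nat -> nat -> {linear V -> V})
    (k : nat) (x : V) : Prop :=
  forall i j, (i < k)%N -> p i j x = 0.

Definition Fcube (V : lmodType R) (p : nat -> nat -> {linear V -> V})
    (k : nat) (x : V) : Prop :=
  forall i j, (i + j < k)%N -> p i j x = 0.

Definition filtered_htpy_equiv (V W : lmodType R)
    (FV : nat -> V -> Prop) (dV : {linear V -> V})
    (FW : nat -> W -> Prop) (dW : {linear W -> W}) : Prop :=
  exists (f : {linear V -> W}) (g : {linear W -> V})
         (h : {linear V -> V}) (h' : {linear W -> W}),
    [/\ (forall x, f (dV x) = dW (f x)) /\ (forall y, g (dW y) = dV (g y)),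
        (forall k x, FV k x -> FW k (f x)) /\ (forall k y, FW k y -> FV k (g y)),
        (forall k x, FV k x -> FV k (h x)) /\ (forall k y, FW k y -> FW k (h' y)) &
        (forall x, g (f x) - x = dV (h x) + h (dV x)) /\
        (forall y, f (g y) - y = dW (h' y) + h' (dW y))].

(* Spectral sequence of a descending filtration F on a differential module:
   E_r^p = Z_r^p / (Z_{r-1}^{p+1} + B_r^p), with
   Z_r^p = { x in F^p | d x in F^{p+r} },  B_r^p = F^p /\ d (F^{p-r+1}). *)
Definition SSZ (V : lmodType R) (F : nat -> V -> Prop) (d : {linear V -> V})
    (r p : nat) (x : V) : Prop := F p x /\ F (p + r)%N (d x).

Definition SSB (V : lmodType R) (F : nat -> V -> Prop) (d : {linear V -> V})
    (r p : nat) (y : V) : Prop :=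
  F p y /\ exists x, F (p.+1 - r)%N x /\ d x = y.

Definition SSN (V : lmodType R) (F : nat -> V -> Prop) (d : {linear V -> V})
    (r p : nat) (y : V) : Prop :=
  exists a b, [/\ SSZ F d r.-1 p.+1 a, SSB F d r p b & y = a + b].

(* An R-linear isomorphism between subquotients Z/N and Z'/N'
   (N <= Z, N' <= Z'), given by a map on representatives. *)
Definition sq_iso (V W : lmodType R) (Z N : V -> Prop) (Z' N' : W -> Prop)
    : Prop :=
  exists phi : V -> W,
    [/\ forall x, Z x -> Z' (phi x),
        forall x y, Z x -> Z y -> N' (phi (x + y) - (phi x + phi y)),
        forall (a : R) x, Z x -> N' (phi (a *: x) - a *: phi x),
        forall x, N x -> N' (phi x) &
        (forall x, Z x -> N' (phi x) -> N x) /\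
        (forall y, Z' y -> exists2 x, Z x & N' (y - phi x))].

Definition sq_zero (V : lmodType R) (Z N : V -> Prop) : Prop :=
  forall x, Z x -> N x.

Definition dcomp (V : lmodType R) (no ni : nat)
    (p : nat -> nat -> {linear V -> V}) (d : {linear V -> V})
    (i j : nat) (x : V) : V :=
  \sum_(a < no.+1) \sum_(b < ni.+1) p (a + i)%N (b + j)%N (d (p a b x)).

(* H_*(H_*(C, d_00), d_01^* ) is supported in inner cube grading c:
   every bihomogeneous cycle of inner grading j <> c is a boundary.
   Cycles: d00 x = 0 and d01 x in im d00; boundaries: im d00 + d01(ker d00). *)
Definition inner_concentrated (V : lmodType R) (no ni : nat)
    (p : nat -> nat -> {linear V -> V}) (d : {linear V -> V}) (c : nat) : Prop :=
  forall i j x, j <> c -> p i j x = x ->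
    dcomp no ni p d 0 0 x = 0 ->
    (exists y, dcomp no ni p d 0 1 x = dcomp no ni p d 0 0 y) ->
    exists y z, dcomp no ni p d 0 0 z = 0 /\
                x = dcomp no ni p d 0 0 y + dcomp no ni p d 0 1 z.

End CubeComplexes.

(* Main.v *)
Require Import Defs.
From HB Require Import structures.
From mathcomp Require Import all_boot all_order all_algebra.
From mathcomp Require Import zify.
From Stdlib Require Import ClassicalEpsilon Classical FunctionalExtensionality PropExtensionality.
Import GRing.Theory.
Local Open Scope ring_scope.
Set Implicit Arguments. Unset Strict Implicit. Unset Printing Implicit Defensive.

Lemma grp1 (M : zmodType) (a b c e : M) : (a + b + c) - (c - e) - b = a + e.
Proof. by rewrite opprB addrA (addrAC _ e) addrK (addrAC a) addrK. Qed.
Lemma grp2 (M : zmodType) (a b c e : M) : (a + b + c) - (c - e) = a + e + b.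
Proof. by rewrite opprB addrA (addrAC _ e) addrK addrAC. Qed.

Lemma grp3 (M : zmodType) (x y a b c : M) : (x - a) + (y - b) - (x + y - c) = c - (a + b).
Proof. by rewrite opprB (addrACA x (-a) y (-b)) [LHS]addrC addrA subrK -opprD. Qed.

Lemma grp4 (M : zmodType) (u v w : M) : (u - v) - (u - w) = w - v.
Proof. by rewrite opprB [LHS]addrC addrA subrK. Qed.

Lemma grp5 (M : zmodType) (y a b e : M) : y - (y - a - b - e) = (b + e) + a.
Proof. by rewrite -(addrA y (-a)) -opprD -(addrA y) -opprD subKr -addrA addrC. Qed.

Lemma grp6 (M : zmodType) (a w e : M) : a + w + (e - w) = a + e.
Proof. by rewrite -addrA (addrCA w) subrr addr0. Qed.

Section SS.
Variable R : pzRingType.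

Definition Fadm (V : lmodType R) (F : nat -> V -> Prop) (d : V -> V) :=
  [/\ forall n, F n 0, forall n x y, F n x -> F n y -> F n (x + y),
      forall n (a : R) x, F n x -> F n (a *: x), forall n x, F n.+1 x -> F n x
    & forall n x, F n x -> F n (d x)].

Definition Zs (V : lmodType R) (F : nat -> V -> Prop) (d : V -> V) s t (x : V) :=
  F s x /\ F t (d x).

Definition Ns (V : lmodType R) (F : nat -> V -> Prop) (d : V -> V) r p (y : V) :=
  exists a b, [/\ Zs F d p.+1 (p + r)%N a, F p b /\ (exists e, F (p.+1 - r)%N e /\ d e = b)
              & y = a + b].

Definition iso_lin (V W : lmodType R) (phi : V -> W) (Z N : V -> Prop) (Z' N' : W -> Prop) :=
  [/\ forall x, Z x -> Z' (phi x), forall x, N x -> N' (phi x),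
      forall y, Z' y -> exists2 x, Z x & N' (y - phi x)
    & forall x, Z x -> N' (phi x) -> N x].

Lemma isoS (V W : lmodType R) (phi : V -> W) Z N Z' N' :
  iso_lin phi Z N Z' N' -> forall y, Z' y -> exists2 x, Z x & N' (y - phi x).
Proof. by case. Qed.
Lemma isoI (V W : lmodType R) (phi : V -> W) Z N Z' N' :
  iso_lin phi Z N Z' N' -> forall x, Z x -> N' (phi x) -> N x.
Proof. by case. Qed.

Section Adm.
Variables (V : lmodType R) (F : nat -> V -> Prop) (d : {linear V -> V}).
Hypothesis HF : Fadm F d.
Hypothesis dd : forall x, d (d x) = 0.

Lemma F0 n : F n 0. Proof. by case: HF => H _ _ _ _; apply: H. Qed.
Lemma FD n x y : F n x -> F n y -> F n (x + y). Proof. by case: HF => _ H _ _ _; apply: H. Qed.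
Lemma FZ n a x : F n x -> F n (a *: x). Proof. by case: HF => _ _ H _ _; apply: H. Qed.
Lemma FN n x : F n x -> F n (- x). Proof. by move=> Hx; rewrite -scaleN1r; apply: FZ. Qed.
Lemma FB n x y : F n x -> F n y -> F n (x - y). Proof. by move=> *; apply: FD => //; apply: FN. Qed.
Lemma Fd n x : F n x -> F n (d x). Proof. by case: HF => _ _ _ _ H; apply: H. Qed.
Lemma Fmono m n x : (m <= n)%N -> F n x -> F m x.
Proof.
have Hs : forall k y, F k.+1 y -> F k y by case: HF => _ _ _ H _; apply: H.
move=> le; elim: n le x => [|n IH] le x Hx; first by have -> : m = 0%N by lia.
case: (leqP m n) => h; first by apply: IH => //; apply: Hs.
by have -> : m = n.+1 by lia.
Qed.

Lemma ZsD s t x y : Zs F d s t x -> Zs F d s t y -> Zs F d s t (x + y).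
Proof. by move=> [? ?] [? ?]; split; rewrite ?linearD; apply: FD. Qed.
Lemma ZsZ s t a x : Zs F d s t x -> Zs F d s t (a *: x).
Proof. by move=> [? ?]; split; rewrite ?linearZ; apply: FZ. Qed.
Lemma ZsN s t x : Zs F d s t x -> Zs F d s t (- x).
Proof. by move=> H; rewrite -scaleN1r; apply: ZsZ. Qed.
Lemma Zs0 s t : Zs F d s t 0. Proof. by split; rewrite ?linear0; apply: F0. Qed.

Lemma NsD r p x y : Ns F d r p x -> Ns F d r p y -> Ns F d r p (x + y).
Proof.
move=> [a [b [Za [Fb [e [Fe de]]] ->]]] [a' [b' [Za' [Fb' [e' [Fe' de']]] ->]]].
exists (a + a'), (b + b'); split; first by apply: ZsD.
  split; first by apply: FD. by exists (e + e'); rewrite linearD de de'; split => //; apply: FD.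
by rewrite addrACA.
Qed.
Lemma NsZ r p k x : Ns F d r p x -> Ns F d r p (k *: x).
Proof.
move=> [a [b [Za [Fb [e [Fe de]]] ->]]].
exists (k *: a), (k *: b); split; first by apply: ZsZ.
  split; first by apply: FZ. by exists (k *: e); rewrite linearZ de; split => //; apply: FZ.
by rewrite scalerDr.
Qed.
Lemma NsN r p x : Ns F d r p x -> Ns F d r p (- x).
Proof. by move=> H; rewrite -scaleN1r; apply: NsZ. Qed.
Lemma NsB r p x y : Ns F d r p x -> Ns F d r p y -> Ns F d r p (x - y).
Proof. by move=> *; apply: NsD => //; apply: NsN. Qed.
Lemma Ns0 r p : Ns F d r p 0.
Proof.
exists 0, 0; split; first exact: Zs0. split; first exact: F0.
  by exists 0; rewrite linear0; split => //; apply: F0.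
by rewrite addr0.
Qed.
Lemma NsZs r p x : (0 < r)%N -> Ns F d r p x -> Zs F d p (p + r) x.
Proof.
move=> r0 [a [b [[Fa Fda] [Fb [e [Fe de]]] ->]]]; split.
  by apply: FD => //; apply: (Fmono (n := p.+1)).
by rewrite linearD -de dd addr0.
Qed.
Lemma ZsNs_B r p e : F (p.+1 - r) e -> F p (d e) -> Ns F d r p (d e).
Proof.
move=> Fe Fde; exists 0, (d e); split; first exact: Zs0.
  by split => //; exists e.
by rewrite add0r.
Qed.
Lemma ZsNs_Z r p a : Zs F d p.+1 (p + r) a -> Ns F d r p a.
Proof.
move=> Za; exists a, 0; split => //. split; first exact: F0.
  by exists 0; rewrite linear0; split => //; apply: F0.
by rewrite addr0.
Qed.
End Adm.

Lemma SSN_Ns (V : lmodType R) (F : nat -> V -> Prop) (d : {linear V -> V}) r p y :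
  (0 < r)%N -> SSN F d r p y <-> Ns F d r p y.
Proof.
move=> r0; rewrite /SSN /Ns /SSZ /SSB /Zs.
have -> : (p.+1 + r.-1 = p + r)%N by lia.
by [].
Qed.

Definition fmap (V W : lmodType R) (FV : nat -> V -> Prop) (FW : nat -> W -> Prop)
  (dV : V -> V) (dW : W -> W) (phi : V -> W) :=
  [/\ forall x y, phi (x + y) = phi x + phi y, forall a x, phi (a *: x) = a *: phi x,
      forall x, phi (dV x) = dW (phi x) & forall n x, FV n x -> FW n (phi x)].

Section Map.
Variables (V W : lmodType R) (FV : nat -> V -> Prop) (FW : nat -> W -> Prop).
Variables (dV : {linear V -> V}) (dW : {linear W -> W}).
Hypothesis HFV : Fadm FV dV.
Hypothesis HFW : Fadm FW dW.
Hypothesis ddV : forall x, dV (dV x) = 0.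
Hypothesis ddW : forall x, dW (dW x) = 0.


Variable phi : V -> W.
Hypothesis Hphi : fmap FV FW dV dW phi.

Lemma phiD x y : phi (x + y) = phi x + phi y. Proof. by case: Hphi. Qed.
Lemma phiZ a x : phi (a *: x) = a *: phi x. Proof. by case: Hphi. Qed.
Lemma phid x : phi (dV x) = dW (phi x). Proof. by case: Hphi. Qed.
Lemma phiF n x : FV n x -> FW n (phi x). Proof. by case: Hphi => _ _ _; apply. Qed.
Lemma phiN x : phi (- x) = - phi x. Proof. by rewrite -scaleN1r phiZ scaleN1r. Qed.
Lemma phiB x y : phi (x - y) = phi x - phi y. Proof. by rewrite phiD phiN. Qed.
Lemma phi0 : phi 0 = 0. Proof. by rewrite -(scale0r 0) phiZ scale0r. Qed.

Lemma phiZs s t x : Zs FV dV s t x -> Zs FW dW s t (phi x).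
Proof. by move=> [? ?]; split; rewrite -?phid; apply: phiF. Qed.
Lemma phiNs r p x : Ns FV dV r p x -> Ns FW dW r p (phi x).
Proof.
move=> [a [b [Za [Fb [e [Fe de]]] ->]]]; exists (phi a), (phi b); split.
- exact: phiZs.
- split; first exact: phiF. by exists (phi e); rewrite -phid de; split => //; apply: phiF.
- by rewrite phiD.
Qed.

Definition SI r p := iso_lin phi (Zs FV dV p (p + r)) (Ns FV dV r p)
                                 (Zs FW dW p (p + r)) (Ns FW dW r p).

Lemma SI_step r : (0 < r)%N -> (forall p, SI r p) -> forall p, SI r.+1 p.
Proof.
move=> r0 IH p; split.
- exact: phiZs.
- exact: phiNs.
- move=> y [Fy Fdy].
  have [x [Fx Fdx] Hn] := isoS (IH p) (conj Fy (Fmono HFW (m := (p + r)%N) (n := (p + r.+1)%N) ltac:(lia) Fdy)).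
  move: Hn => [a' [b' [[Fa' Fda'] [Fb' [e' [Fe' de']]] Hyx]]].
  have Zdx : Zs FV dV (p + r) (p + r + r) (dV x) by split => //; rewrite ddV; apply: (F0 HFV).
  have Ndx : Ns FW dW r (p + r) (phi (dV x)).
    exists (dW y), (- dW a'); split.
    + by split; [apply: (Fmono HFW (n := (p + r.+1)%N)); first lia | rewrite ddW; apply: (F0 HFW)].
    + split; first by apply: (FN HFW) => //; apply: Fda'.
      exists (- a'); rewrite linearN; split => //; apply: (FN HFW) => //.
      by apply: (Fmono HFW (n := p.+1)) => //; lia.
    + have : y - phi x = a' + b' by [].
      move=> /(congr1 dW); rewrite linearB linearD -de' ddW addr0 -phid => E.
      by rewrite -E opprB addrCA subrr addr0.
  have [al [be [[Fal Fdal] [Fbe [eps [Feps deps]]] Edx]]] := isoI (IH (p + r)%N) Zdx Ndx.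
  exists (x - eps).
    split; first by apply: (FB HFV) => //; apply: (Fmono HFV (n := ((p + r).+1 - r)%N)) => //; lia.
    rewrite linearB deps.
    have -> : dV x - be = al by rewrite Edx addrK.
    by apply: (Fmono HFV (n := (p + r).+1)) => //; lia.
  exists (a' + phi eps), b'; split.
  + split; first by apply: (FD HFW) => //; apply: phiF; apply: (Fmono HFV (n := ((p + r).+1 - r)%N)) => //; lia.
    have Ey : y = a' + b' + phi x by rewrite -Hyx subrK.
    have -> : a' + phi eps = (y - phi (x - eps)) - b' by rewrite Ey phiB grp1.
    rewrite !linearB -de' ddW subr0 -phid linearB deps.
    have -> : dV x - be = al by rewrite Edx addrK.
    apply: (FB HFW) => //.
    by apply: phiF; apply: (Fmono HFV (n := (p + r).+1)) => //; lia.
  + split => //; exists e'; split => //; apply: (Fmono HFW (n := (p.+1 - r)%N)) => //; lia.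
  + have Ey : y = a' + b' + phi x by rewrite -Hyx subrK.
    by rewrite Ey phiB grp2.
- move=> x [Fx Fdx] [a' [b' [[Fa' Fda'] [Fb' [e' [Fe' de']]] Ephi]]].
  case: (leqP r p) => rp.
  + have Ze' : Zs FW dW (p - r) (p - r + r) e'.
      split; first by move: Fe'; have -> : (p.+1 - r.+1 = p - r)%N by lia. 
      have -> : (p - r + r = p)%N by lia.
      by rewrite de'.
    have [eps [Feps Fdeps] Hn] := isoS (IH (p - r)%N) Ze'.
    move: Hn => [a'' [b'' [[Fa'' Fda''] [Fb'' [e'' [Fe'' de'']]] He]]].
    have Fdeps' : FV p (dV eps) by move: Fdeps; have -> : (p - r + r = p)%N by lia.
    have Zx1 : Zs FV dV p (p + r) (x - dV eps).
      split; first by apply: (FB HFV).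
      by rewrite linearB ddV subr0; apply: (Fmono HFV (n := (p + r.+1)%N)) => //; lia.
    have Nx1 : Ns FW dW r p (phi (x - dV eps)).
      exists a', (dW a''); split.
      * split => //; apply: (Fmono HFW (n := (p + r.+1)%N)) => //; lia.
      * split; first by move: Fda''; have -> : (p - r + r = p)%N by lia.
        exists a''; split => //; move: Fa''; have -> : ((p - r).+1 = p.+1 - r)%N by lia. by [].
      * rewrite phiB Ephi phid -de'.
        have -> : e' = a'' + b'' + phi eps by rewrite -He subrK.
        by rewrite !linearD -de'' ddW addr0 addrA addrK.
    have [al [be [[Fal Fdal] [Fbe [eta [Feta deta]]] Ex1]]] := isoI (IH p) Zx1 Nx1.
    exists al, (dV (eta + eps)); split.
    * split => //.
      have -> : al = x - dV eps - be by rewrite Ex1 addrK.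
      rewrite !linearB ddV subr0 -deta ddV subr0 //.
    * split; first by rewrite linearD deta; apply: (FD HFV).
      exists (eta + eps); split => //; apply: (FD HFV).
      -- by apply: (Fmono HFV (n := (p.+1 - r)%N)) => //; lia.
      -- by move: Feps; have -> : (p.+1 - r.+1 = p - r)%N by lia.
    * by rewrite linearD deta addrA -Ex1 subrK.
  + have Nx : Ns FW dW r p (phi x).
      exists a', b'; split => //.
      * split => //; apply: (Fmono HFW (n := (p + r.+1)%N)) => //; lia.
      * split => //; exists e'; split => //; move: Fe'.
        by have -> : (p.+1 - r.+1 = p.+1 - r)%N by lia.
    have Zx : Zs FV dV p (p + r) x.
      by split => //; apply: (Fmono HFV (n := (p + r.+1)%N)) => //; lia.
    have [al [be [[Fal Fdal] [Fbe [eta [Feta deta]]] Ex]]] := isoI (IH p) Zx Nx.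
    exists al, be; split => //.
    * split => //; have -> : al = x - be by rewrite Ex addrK.
      by rewrite linearB -deta ddV subr0.
    * split => //; exists eta; split => //; move: Feta.
      by have -> : (p.+1 - r.+1 = p.+1 - r)%N by lia.
Qed.

End Map.

Section Htpy.
Variables (V W : lmodType R) (FV : nat -> V -> Prop) (FW : nat -> W -> Prop).
Variables (dV : {linear V -> V}) (dW : {linear W -> W}).
Hypothesis HFV : Fadm FV dV.
Hypothesis HFW : Fadm FW dW.
Hypothesis ddV : forall x, dV (dV x) = 0.
Hypothesis ddW : forall x, dW (dW x) = 0.
Variable phi : V -> W.
Hypothesis Hphi : fmap FV FW dV dW phi.

Lemma SI_htpy (g : W -> V) (h : V -> V) (h' : W -> W) :
  fmap FW FV dW dV g ->
  (forall n x, FV n x -> FV n (h x)) -> h 0 = 0 ->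
  (forall n y, FW n y -> FW n (h' y)) -> h' 0 = 0 ->
  (forall x, g (phi x) - x = dV (h x) + h (dV x)) ->
  (forall y, phi (g y) - y = dW (h' y) + h' (dW y)) ->
  forall r p, (0 < r)%N -> SI FV FW dV dW phi r p.
Proof.
move=> Hg hF h0 h'F h'0 Hgf Hfg r p r0.
have K : forall (U : lmodType R) (F : nat -> U -> Prop) (dU : {linear U -> U})
   (k : U -> U) (hh : U -> U), Fadm F dU -> (forall x, dU (dU x) = 0) ->
   (forall n x, F n x -> F n (k x)) -> (forall n x, F n x -> F n (hh x)) -> hh 0 = 0 ->
   (forall x, k x - x = dU (hh x) + hh (dU x)) ->
   forall x, Zs F dU p (p + r) x -> Ns F dU r p (k x - x).
  move=> U F dU k hh HF ddU kF hhF hh0 Hk x [Fx Fdx].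
  exists (hh (dU x)), (dU (hh x)); split.
  - split; first by apply: hhF; apply: (Fmono HF (n := (p + r)%N)) => //; lia.
    have := Hk (dU x); rewrite ddU hh0 addr0 => <-.
    by apply: (FB HF) => //; apply: kF.
  - split; last by exists (hh x); split => //; apply: (Fmono HF (n := p)) => //; [lia | apply: hhF].
    have -> : dU (hh x) = (k x - x) - hh (dU x) by rewrite Hk addrK.
    apply: (FB HF); first by apply: (FB HF) => //; apply: kF.
    by apply: hhF; apply: (Fmono HF (n := (p + r)%N)) => //; lia.
  - by rewrite Hk addrC.
split.
- exact: (phiZs Hphi).
- exact: (phiNs Hphi).
- move=> y Zy; exists (g y); first exact: (phiZs Hg).
  rewrite -opprB; apply: (NsN HFW).
  apply: (K W FW dW (fun y => phi (g y)) h') => // n z Fz.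
  by apply: (phiF Hphi); apply: (phiF Hg).
- move=> x Zx Nx.
  have Ngf := phiNs Hg Nx.
  have -> : x = g (phi x) - (g (phi x) - x) by rewrite opprB addrC subrK.
  apply: (NsB HFV) => //.
  apply: (K V FV dV (fun x => g (phi x)) h) => // n z Fz.
  by apply: (phiF Hg); apply: (phiF Hphi).
Qed.

End Htpy.

Lemma iso_comp (V1 V2 V3 : lmodType R) (f1 : V1 -> V2) (f2 : V2 -> V3) Z1 N1 Z2 N2 Z3 N3 :
  iso_lin f1 Z1 N1 Z2 N2 -> iso_lin f2 Z2 N2 Z3 N3 ->
  (forall x y, f2 (x - y) = f2 x - f2 y) -> (forall x y, N3 x -> N3 y -> N3 (x + y)) ->
  iso_lin (fun x => f2 (f1 x)) Z1 N1 Z3 N3.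
Proof.
move=> [A1 B1 S1 I1] [A2 B2 S2 I2] f2B N3D; split.
- by move=> x /A1 /A2.
- by move=> x /B1 /B2.
- move=> y3 /S2 [x2 Zx2 Ny]; have [x1 Zx1 Nx] := S1 _ Zx2.
  exists x1 => //; have := B2 _ Nx; rewrite f2B => Nx'.
  by rewrite -(subrKA (f2 x2)); apply: N3D.
- by move=> x Zx /(I2 _ (A1 _ Zx)) /(I1 _ Zx).
Qed.

Lemma sq_from_span (V1 V2 V3 : lmodType R) (f1 : V1 -> V2) (f2 : V1 -> V3) Z1 N1 Z2 N2 Z3 N3 :
  iso_lin f1 Z1 N1 Z2 N2 -> iso_lin f2 Z1 N1 Z3 N3 ->
  (forall x y, f1 (x - y) = f1 x - f1 y) -> (forall a x, f1 (a *: x) = a *: f1 x) ->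
  (forall x y, f2 (x - y) = f2 x - f2 y) -> (forall a x, f2 (a *: x) = a *: f2 x) ->
  (forall x y, Z1 x -> Z1 y -> Z1 (x - y)) -> (forall x y, Z1 x -> Z1 y -> Z1 (x + y)) ->
  (forall a x, Z1 x -> Z1 (a *: x)) ->
  (forall x y, Z2 x -> Z2 y -> Z2 (x + y)) -> (forall a x, Z2 x -> Z2 (a *: x)) ->
  (forall x y, N2 x -> N2 y -> N2 (x - y)) -> (forall a x, N2 x -> N2 (a *: x)) ->
  (forall x, N2 x -> Z2 x) ->
  (forall x y, N3 x -> N3 y -> N3 (x - y)) ->
  sq_iso Z2 N2 Z3 N3.
Proof.
move=> [A1 B1 S1 I1] [A2 B2 S2 I2] f1B f1Z f2B f2Z Z1B Z1D Z1Z Z2D Z2Z N2B N2Z N2Z2 N3B.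
have f1D : forall x y, f1 (x + y) = f1 x + f1 y by move=> x y; rewrite -(opprK y) f1B -(sub0r y) f1B
  (_ : f1 0 = 0) ?sub0r ?opprK // -(subrr 0) f1B subrr.
have f2D : forall x y, f2 (x + y) = f2 x + f2 y by move=> x y; rewrite -(opprK y) f2B -(sub0r y) f2B
  (_ : f2 0 = 0) ?sub0r ?opprK // -(subrr 0) f2B subrr.
have N2N : forall x, N2 x -> N2 (- x) by move=> x Nx; rewrite -sub0r; apply: (N2B) => //;
  rewrite -(subrr x); apply: (N2B).
have N2D : forall x y, N2 x -> N2 y -> N2 (x + y) by move=> x y ? ?; rewrite -(opprK y); apply: (N2B) => //; apply: (N2N).
have ex_sel : forall y, exists x, Z2 y -> Z1 x /\ N2 (y - f1 x).
  move=> y; case: (classic (Z2 y)) => Zy.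
    by have [x ? ?] := S1 _ Zy; exists x.
  by exists 0.
pose sel y := proj1_sig (constructive_indefinite_description _ (ex_sel y)).
have selP : forall y, Z2 y -> Z1 (sel y) /\ N2 (y - f1 (sel y)).
  by move=> y; rewrite /sel; case: (constructive_indefinite_description _ _).
exists (fun y => f2 (sel y)); split.
- by move=> y /selP [/A2].
- move=> x y Zx Zy.
  have Zxy := Z2D _ _ Zx Zy.
  have [Zs1 Ns1] := selP _ Zxy; have [Zsx Nsx] := selP _ Zx; have [Zsy Nsy] := selP _ Zy.
  have Zd : Z1 (sel (x + y) - (sel x + sel y)) by apply: (Z1B) => //; apply: (Z1D).
  have Nd : N2 (f1 (sel (x + y) - (sel x + sel y))).
    have -> : f1 (sel (x + y) - (sel x + sel y)) =
       (x - f1 (sel x)) + (y - f1 (sel y)) - (x + y - f1 (sel (x + y))).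
      by rewrite f1B f1D grp3.
    by apply: (N2B) => //; apply: (N2D).
  have := B2 _ (I1 _ Zd Nd); rewrite f2B f2D => //.
- move=> a x Zx.
  have Zax := Z2Z a _ Zx.
  have [Zs1 Ns1] := selP _ Zax; have [Zsx Nsx] := selP _ Zx.
  have Zd : Z1 (sel (a *: x) - a *: sel x) by apply: (Z1B) => //; apply: (Z1Z).
  have Nd : N2 (f1 (sel (a *: x) - a *: sel x)).
    have -> : f1 (sel (a *: x) - a *: sel x) = a *: (x - f1 (sel x)) - (a *: x - f1 (sel (a *: x))).
      by rewrite f1B f1Z scalerBr grp4.
    by apply: (N2B) => //; apply: (N2Z).
  by have := B2 _ (I1 _ Zd Nd); rewrite f2B f2Z.
- move=> y Ny; have Zy := N2Z2 _ Ny; have [Zs Ns] := selP _ Zy.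
  apply: (B2); apply: (I1) => //.
  have -> : f1 (sel y) = y - (y - f1 (sel y)) by rewrite opprB addrC subrK.
  exact: N2B.
- split.
  + move=> y Zy Npsi; have [Zs Ns] := selP _ Zy.
    have := A1 _ Zs => _; have := B1 _ (I2 _ Zs Npsi) => Nf.
    by rewrite -(subrK (f1 (sel y)) y); apply: (N2D).
  + move=> w Zw; have [x Zx Nw] := S2 _ Zw.
    have Zy := A1 _ Zx; exists (f1 x) => //.
    have [Zs Ns] := selP _ Zy.
    have Zd : Z1 (sel (f1 x) - x) by apply: (Z1B).
    have Nd : N2 (f1 (sel (f1 x) - x)) by rewrite f1B -opprB; apply: (N2N).
    have := B2 _ (I1 _ Zd Nd); rewrite f2B => Nd'.
    have -> : w - f2 (sel (f1 x)) = (w - f2 x) - (f2 (sel (f1 x)) - f2 x)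
      by rewrite opprB addrA subrK.
    exact: N3B.
Qed.
End SS.

Section Cube.
Variables (R : pzRingType) (V : lmodType R) (no ni : nat).
Variables (p : nat -> nat -> {linear V -> V}) (d : {linear V -> V}).
Hypothesis Hcc : cube_complex no ni p d.

Lemma pp_ i j i' j' x : p i j (p i' j' x) = if (i == i') && (j == j') then p i j x else 0.
Proof. by case: Hcc => H _ _ _; apply: H. Qed.
Lemma pdec x : x = \sum_(i < no.+1) \sum_(j < ni.+1) p i j x.
Proof. by case: Hcc => _ H _ _; apply: H. Qed.
Lemma dd x : d (d x) = 0.
Proof. by case: Hcc => _ _ H _; apply: H. Qed.
Lemma pd i j i' j' x : ~~ ((i <= i')%N && (j <= j')%N) -> p i' j' (d (p i j x)) = 0.
Proof. by case: Hcc => _ _ _ H; apply: H. Qed.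

Lemma pp i j x : p i j (p i j x) = p i j x.
Proof. by rewrite pp_ !eqxx. Qed.

Lemma sum_single (F : nat -> nat -> V) i j :
  (i <= no)%N -> (j <= ni)%N -> (forall a b, (a != i) || (b != j) -> F a b = 0) ->
  \sum_(a < no.+1) \sum_(b < ni.+1) F a b = F i j.
Proof.
move=> hi hj HF.
have hi' : (i < no.+1)%N by lia. have hj' : (j < ni.+1)%N by lia.
rewrite (bigD1 (Ordinal hi')) //=.
have -> : \sum_(a < no.+1 | a != Ordinal hi') \sum_(b < ni.+1) F a b = 0.
  apply: big1 => a ne; apply: big1 => b _; apply: HF; apply/orP; left.
  by apply: contra ne => /eqP E; apply/eqP/val_inj.
rewrite addr0 (bigD1 (Ordinal hj')) //=.
have -> : \sum_(b < ni.+1 | b != Ordinal hj') F i b = 0.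
  apply: big1 => b ne; apply: HF; apply/orP; right.
  by apply: contra ne => /eqP E; apply/eqP/val_inj.
by rewrite addr0.
Qed.

Lemma p_out i j x : (no < i)%N || (ni < j)%N -> p i j x = 0.
Proof.
move=> h; rewrite (pdec x) linear_sum big1 // => a _; rewrite linear_sum big1 // => b _.
rewrite pp_; case: ifP => // /andP [/eqP e1 /eqP e2].
by move: h (ltn_ord a) (ltn_ord b); rewrite -e1 -e2; lia.
Qed.

Lemma ext x y : (forall i j, p i j x = p i j y) -> x = y.
Proof.
move=> H; rewrite (pdec x) (pdec y); apply: eq_bigr => i _; apply: eq_bigr => j _; exact: H.
Qed.

Definition supp (S : nat -> nat -> bool) x := forall i j, ~~ S i j -> p i j x = 0.

Lemma supp0 S : supp S 0. Proof. by move=> i j _; rewrite linear0. Qed.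
Lemma suppD S x y : supp S x -> supp S y -> supp S (x + y).
Proof. by move=> Hx Hy i j h; rewrite linearD Hx // Hy // addr0. Qed.
Lemma suppN S x : supp S x -> supp S (- x).
Proof. by move=> Hx i j h; rewrite linearN Hx // oppr0. Qed.
Lemma suppB S x y : supp S x -> supp S y -> supp S (x - y).
Proof. by move=> *; apply: suppD => //; apply: suppN. Qed.
Lemma suppZ S a x : supp S x -> supp S (a *: x).
Proof. by move=> Hx i j h; rewrite linearZ /= Hx // scaler0. Qed.
Lemma supp_mono (S S' : nat -> nat -> bool) x : (forall i j, S i j -> S' i j) -> supp S x -> supp S' x.
Proof. by move=> HS Hx i j h; apply: Hx; apply/negP => /HS; apply/negP. Qed.
Lemma supp_p i j x : supp (fun a b => (a == i) && (b == j)) (p i j x).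
Proof. by move=> a b h; rewrite pp_; move: h; case: (_ && _). Qed.
Lemma supp_at S x a b : supp S x -> p a b x = 0 ->
  supp (fun i j => S i j && ~~ ((i == a) && (j == b))) x.
Proof.
move=> Hx H0 i j; rewrite negb_and negbK => /orP [/Hx //|/andP [/eqP -> /eqP ->]] //.
Qed.
Lemma supp_false x : supp (fun _ _ => false) x -> x = 0.
Proof. by move=> H; apply: ext => i j; rewrite H // linear0. Qed.

Lemma supp_d (S S' : nat -> nat -> bool) x : supp S x ->
  (forall a b i j, S a b -> (a <= i)%N -> (b <= j)%N -> S' i j) -> supp S' (d x).
Proof.
move=> Hx HS i j nS'.
rewrite {1}(pdec x) linear_sum linear_sum big1 // => a _.
rewrite linear_sum linear_sum big1 // => b _.
case: (boolP (S a b)) => Sab.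
  case: (boolP ((a <= i)%N && (b <= j)%N)) => [/andP [h1 h2]| h]; last by rewrite pd.
  by move: nS' => /negP; case; apply: HS Sab h1 h2.
by rewrite (Hx _ _ Sab) !linear0.
Qed.

Lemma comp_d_box m n x x' : (forall a b, (a <= m)%N -> (b <= n)%N -> p a b x = p a b x') ->
  p m n (d x) = p m n (d x').
Proof.
move=> H; apply/eqP; rewrite -subr_eq0 -!linearB; apply/eqP.
have : supp (fun a b => ~~ ((a <= m)%N && (b <= n)%N)) (x - x').
  by move=> a b; rewrite negbK => /andP [h1 h2]; rewrite linearB H // subrr.
move/supp_d => /(_ (fun a b => ~~ ((a <= m)%N && (b <= n)%N))) H'.
apply: H'; last by rewrite negbK !leqnn.
move=> a b i j h h1 h2; apply/negP => /andP [h3 h4]; move/negP: h; apply; lia.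
Qed.

Definition PS (S : nat -> nat -> bool) x :=
  \sum_(i < no.+1) \sum_(j < ni.+1) (if S i j then p i j x else 0).

Lemma p_PS S a b x : p a b (PS S x) = if S a b then p a b x else 0.
Proof.
case: (boolP ((a <= no)%N && (b <= ni)%N)) => [/andP [ha hb]|h]; last first.
  have h' : (no < a)%N || (ni < b)%N by lia.
  by rewrite p_out //; case: (S a b) => //; rewrite p_out.
rewrite /PS linear_sum (eq_bigr (fun i : 'I_no.+1 => \sum_(j < ni.+1) p a b (if S i j then p i j x else 0))).
  rewrite (sum_single (F := fun i j => p a b (if S i j then p i j x else 0)) ha hb).
    by case: (S a b) => //; rewrite ?pp ?linear0.
  move=> i j h; case: (S i j); last by rewrite linear0.
  by rewrite pp_; case: ifP => // /andP [/eqP e1 /eqP e2]; move: h; rewrite e1 e2 !eqxx.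
by move=> i _; rewrite linear_sum.
Qed.

Lemma supp_PS S x : supp S (PS S x).
Proof. by move=> i j h; rewrite p_PS (negbTE h). Qed.

Definition FWt (w : nat -> nat -> nat) n x := supp (fun i j => (n <= w i j)%N) x.

Definition wmono (w : nat -> nat -> nat) :=
  forall a b i j, (a <= i)%N -> (b <= j)%N -> (w a b <= w i j)%N.

Lemma FWt_adm w : wmono w -> Fadm (FWt w) d.
Proof.
move=> Hw; split.
- by move=> n; apply: supp0.
- by move=> n x y; apply: suppD.
- by move=> n a x; apply: suppZ.
- by move=> n x; apply: supp_mono => i j /=; lia.
- move=> n x Hx; apply: (supp_d Hx) => a b i j h1 h2 h3 /=.
  by apply: leq_trans h1 (Hw _ _ _ _ h2 h3).
Qed.

Lemma Fcube_FWt n x : Fcube p n x <-> FWt (fun i j => i + j)%N n x.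
Proof. by split => H i j h; apply: H; lia. Qed.
Lemma Fout_FWt n x : Fout p n x <-> FWt (fun i j => i)%N n x.
Proof. by split => H i j h; apply: H; lia. Qed.

Lemma p_dcomp k l m n y : (k <= m)%N -> (l <= n)%N ->
  p m n (dcomp no ni p d k l y) = p m n (d (p (m - k) (n - l) y)).
Proof.
move=> hk hl; rewrite /dcomp linear_sum.
rewrite (eq_bigr (fun a : 'I_no.+1 => \sum_(b < ni.+1)
   p m n (p (a + k) (b + l) (d (p a b y))))); last by move=> a _; rewrite linear_sum.
case: (boolP ((m - k <= no)%N && (n - l <= ni)%N)) => [/andP [ha hb]|h].
  rewrite (sum_single (F := fun a b => p m n (p (a + k) (b + l) (d (p a b y)))) ha hb).
    by rewrite !subnK // pp.
  move=> a b h; rewrite pp_; case: ifP => // /andP [/eqP e1 /eqP e2].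
  by move: h; rewrite e1 e2 !addnK !eqxx.
rewrite big1; last first.
  move=> a _; rewrite big1 // => b _; rewrite pp_; case: ifP => // /andP [/eqP e1 /eqP e2].
  by move: h (ltn_ord a) (ltn_ord b); rewrite e1 e2 !addnK; lia.
by rewrite (p_out (i := (m - k)%N) (j := (n - l)%N)) ?linear0 //; lia.
Qed.

Lemma p_dcomp0 k l m n y : (n < l)%N -> p m n (dcomp no ni p d k l y) = 0.
Proof.
move=> h; rewrite /dcomp linear_sum big1 // => a _; rewrite linear_sum big1 // => b _.
by rewrite pp_; case: ifP => // /andP [_ /eqP e]; lia.
Qed.

Lemma dcomp_hom k l i j x : p i j x = x ->
  dcomp no ni p d k l x = p (i + k) (j + l) (d x).
Proof.
move=> hx; apply: ext => m n.
case: (boolP ((i + k == m) && (j + l == n))) => [/andP [/eqP e1 /eqP e2]|h].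
  by rewrite -e1 -e2 p_dcomp ?leq_addl // !addnK pp hx.
rewrite pp_ eq_sym (eq_sym n) (negbTE h).
case: (boolP ((k <= m)%N && (l <= n)%N)) => [/andP [h1 h2]|h1]; last first.
  case: (leqP l n) => h2; last by rewrite p_dcomp0.
  rewrite /dcomp linear_sum big1 // => a _; rewrite linear_sum big1 // => b _.
  by rewrite pp_; case: ifP => // /andP [/eqP e1 /eqP e2]; move: h1; rewrite e1 e2; lia.
rewrite p_dcomp // -hx pp_.
case: ifP => [/andP [/eqP e1 /eqP e2]|_]; last by rewrite !linear0.
by exfalso; move/negP: h; apply; apply/andP; split; apply/eqP; lia.
Qed.

End Cube.

Definition Rg (i j : nat) := fun a b : nat => (i <= a)%N && (j <= b.+1)%N && ~~ ((a == i) && (b.+1 == j)).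

Section Conc.
Variables (R : pzRingType) (V : lmodType R) (no ni : nat).
Variables (p : nat -> nat -> {linear V -> V}) (d : {linear V -> V}).
Hypothesis Hcc : cube_complex no ni p d.
Variable c : nat.
Hypothesis Hconc : inner_concentrated no ni p d c.

Lemma KL b i j : j != c -> p i j (d b) = 0 -> p i j.+1 (d b) = 0 ->
  (forall a b', (a <= i)%N -> (b' <= j.+1)%N -> ~~ ((a == i) && (b' == j)) ->
     ~~ ((a == i) && (b' == j.+1)) -> p a b' b = 0) ->
  exists u v, [/\ supp p (fun a b' => (a == i) && (b' == j)) u,
    supp p (fun a b' => (a == i) && (b'.+1 == j)) v,
    p i j.-1 (d v) = 0 & p i j b = p i j (d (u + v))].
Proof.
move=> jc H0 H1 Hb.
have pp_' := pp_ Hcc.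
have box : forall a b', (a <= i)%N -> (b' <= j.+1)%N -> p a b' b = p a b' (p i j b + p i j.+1 b).
  move=> a b' ha hb; rewrite linearD !pp_'.
  case: (boolP ((a == i) && (b' == j))) => [/andP [/eqP -> /eqP ->]|h1].
    by rewrite /= ?eqxx /= ?(ltn_eqF (ltnSn j)) ?addr0.
  case: (boolP ((a == i) && (b' == j.+1))) => [/andP [/eqP -> /eqP ->]|h2].
    by rewrite /= ?eqxx /= ?(gtn_eqF (ltnSn j)) ?add0r.
  by rewrite addr0; apply: Hb.
set x := p i j b.
have Hx : p i j x = x by rewrite /x (pp Hcc).
have E0 : p i j (d x) = p i j (d b).
  apply: (comp_d_box Hcc) => a b' ha hb; rewrite /x pp_'.
  case: ifP => [/andP [/eqP -> /eqP ->] //|/negbT h].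
  symmetry; apply: Hb => //; first lia. by apply/negP => /andP [_ /eqP]; lia.
have E1 : p i j.+1 (d x) = - p i j.+1 (d (p i j.+1 b)).
  have S : p i j.+1 (d b) = p i j.+1 (d x) + p i j.+1 (d (p i j.+1 b)).
    by rewrite -linearD -linearD; apply: (comp_d_box Hcc) => a b' ha hb; apply: box.
  by apply/eqP; rewrite -addr_eq0 -S H1.
have H00 : dcomp no ni p d 0 0 x = 0 by rewrite (dcomp_hom Hcc _ _ Hx) !addn0 E0.
have H01 : exists y, dcomp no ni p d 0 1 x = dcomp no ni p d 0 0 y.
  exists (- p i j.+1 b).
  have Hy : p i j.+1 (- p i j.+1 b) = - p i j.+1 b by rewrite linearN (pp Hcc).
  rewrite (dcomp_hom Hcc 0 1 Hx) (dcomp_hom Hcc 0 0 Hy).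
  by rewrite addn0 addn1 addn0 E1 !linearN.
have jc' : j <> c by move=> E; move: jc; rewrite E eqxx.
have [y' [z [Hz Ex]]] := Hconc jc' Hx H00 H01.
exists (p i j y'), (if j is j'.+1 then p i j' z else 0); split.
- exact: (supp_p Hcc).
- case: (j) => [|j']; first exact: supp0.
  have := supp_p Hcc (i:=i) (j:=j') z; apply: supp_mono => a b' /andP [-> /eqP ->] /=.
  by rewrite eqxx.
- case: (j) => [|j'] /=; first by rewrite !linear0.
  by move: (congr1 (p i j') Hz); rewrite (p_dcomp Hcc) // !subn0 linear0.
- rewrite -{1}Hx.
  rewrite {1}Ex !linearD (p_dcomp Hcc) // !subn0; congr (_ + _).
  case: j {jc H0 H1 Hb box x Hx E0 E1 H00 H01 jc' Ex} => [|j'].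
    by rewrite (p_dcomp0 Hcc) // !linear0.
  by rewrite (p_dcomp Hcc) // subn0 subn1.
Qed.

Lemma KL_R i j u v : supp p (fun a b' => (a == i) && (b' == j)) u ->
  supp p (fun a b' => (a == i) && (b'.+1 == j)) v -> p i j.-1 (d v) = 0 ->
  supp p (Rg i j) (d (u + v)).
Proof.
move=> Hu Hv Hdv; rewrite linearD; apply: suppD.
  apply: (supp_d Hcc Hu) => a b i' j' /andP [/eqP -> /eqP ->] h1 h2.
  by rewrite /Rg; apply/andP; split; [apply/andP; split|]; lia.
clear Hu; case: j Hv Hdv => [|j] Hv Hdv.
  have -> : v = 0 by apply: (supp_false Hcc); apply: (supp_mono _ Hv) => a b /andP [].
  by rewrite linear0; apply: supp0.
have Hv' : supp p (fun a b' => (i <= a)%N && (j <= b')%N && ~~ ((a == i) && (b' == j))) (d v).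
  apply: supp_at => //. apply: (supp_d Hcc Hv) => a b i' j' /andP [/eqP -> /eqP [->]] h1 h2.
  by apply/andP; split.
apply: supp_mono Hv' => a b /andP [/andP [h1 h2] h3]; rewrite /Rg.
apply/andP; split; first by apply/andP; split; lia.
by move: h3; apply: contra => /andP [/eqP -> /eqP [->]]; rewrite !eqxx.
Qed.

Lemma ITER n (pi pj : nat -> nat) a :
  (forall k, (k < n)%N -> pj k != c) ->
  (forall k, (k < n)%N -> p (pi k) (pj k) (d a) = 0 /\ p (pi k) (pj k).+1 (d a) = 0) ->
  (forall k, (k < n)%N -> forall a' b', (a' <= pi k)%N -> (b' <= (pj k).+1)%N ->
     ~~ ((a' == pi k) && (b' == pj k)) -> ~~ ((a' == pi k) && (b' == (pj k).+1)) ->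
     (exists2 m, (m < k)%N & (pi m == a') && (pj m == b')) \/
     (p a' b' a = 0 /\ forall m, (m < k)%N -> ~~ Rg (pi m) (pj m) a' b')) ->
  (forall m k, (m < k)%N -> (k < n)%N -> ~~ Rg (pi k) (pj k) (pi m) (pj m)) ->
  exists t, [/\ forall k, (k < n)%N -> p (pi k) (pj k) (a - d t) = 0,
    forall S : nat -> nat -> bool, (forall k, (k < n)%N -> forall a' b',
       ((a' == pi k) && (b' == pj k)) || ((a' == pi k) && (b'.+1 == pj k)) -> S a' b') ->
       supp p S t,
    forall S : nat -> nat -> bool, (forall k, (k < n)%N -> forall a' b',
       Rg (pi k) (pj k) a' b' -> S a' b') -> supp p S (d t)
  & forall a' b', (forall k, (k < n)%N -> ~~ Rg (pi k) (pj k) a' b') -> p a' b' (d t) = 0].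
Proof.
elim: n => [|n IH] Hc Hd HC HD.
  exists 0; split => //.
  - by move=> S _; apply: supp0.
  - by move=> S _; rewrite linear0; apply: supp0.
  - by move=> *; rewrite !linear0.
have [t [T1 T2 T3 T4]] : exists t, [/\ forall k, (k < n)%N -> p (pi k) (pj k) (a - d t) = 0,
    forall S : nat -> nat -> bool, (forall k, (k < n)%N -> forall a' b',
       ((a' == pi k) && (b' == pj k)) || ((a' == pi k) && (b'.+1 == pj k)) -> S a' b') ->
       supp p S t,
    forall S : nat -> nat -> bool, (forall k, (k < n)%N -> forall a' b',
       Rg (pi k) (pj k) a' b' -> S a' b') -> supp p S (d t)
  & forall a' b', (forall k, (k < n)%N -> ~~ Rg (pi k) (pj k) a' b') -> p a' b' (d t) = 0].
  apply: IH.
  - by move=> k hk; apply: Hc; lia.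
  - by move=> k hk; apply: Hd; lia.
  - by move=> k hk; apply: HC; lia.
  - by move=> m k h1 h2; apply: HD; lia.
set b := a - d t.
have [u [v [Hu Hv Hdv Huv]]] : exists u v, [/\ supp p (fun a' b' => (a' == pi n) && (b' == pj n)) u,
    supp p (fun a' b' => (a' == pi n) && (b'.+1 == pj n)) v,
    p (pi n) (pj n).-1 (d v) = 0 & p (pi n) (pj n) b = p (pi n) (pj n) (d (u + v))].
  apply: KL.
  - exact: Hc.
  - by rewrite /b linearB (dd Hcc) subr0; case: (Hd n (ltnSn n)).
  - by rewrite /b linearB (dd Hcc) subr0; case: (Hd n (ltnSn n)).
  - move=> a' b' h1 h2 h3 h4.
    case: (HC n (ltnSn n) a' b' h1 h2 h3 h4) => [[m hm /andP [/eqP <- /eqP <-]]|[h5 h6]].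
      exact: T1.
    by rewrite /b linearB h5 T4 ?subrr // => k hk; apply: h6.
have HR := KL_R Hu Hv Hdv.
exists (t + (u + v)); split.
- move=> k hk.
  have -> : a - d (t + (u + v)) = b - d (u + v) by rewrite /b linearD opprD addrA.
  rewrite linearB.
  case: (ltnP k n) => hkn.
    by rewrite T1 // HR ?subrr //; apply: HD.
  have -> : k = n by lia.
  by rewrite Huv subrr.
- move=> S HS; apply: suppD.
    by apply: T2 => k hk; apply: HS; lia.
  apply: suppD.
    by apply: supp_mono Hu => a' b' h; apply: (HS n) => //; rewrite h.
  by apply: supp_mono Hv => a' b' h; apply: (HS n) => //; rewrite h orbT.
- move=> S HS; rewrite linearD; apply: suppD.
    by apply: T3 => k hk; apply: HS; lia.
  by apply: supp_mono HR => a' b' h; apply: (HS n).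
- move=> a' b' H.
  have -> : p a' b' (d (t + (u + v))) = p a' b' (d t) + p a' b' (d (u + v)).
    by rewrite -linearD -linearD.
  rewrite T4; last by move=> k hk; apply: H; lia.
  by rewrite HR ?add0r //; apply: H.
Qed.

End Conc.

Section Loops.
Variables (R : pzRingType) (V : lmodType R) (no ni : nat).
Variables (p : nat -> nat -> {linear V -> V}) (d : {linear V -> V}).
Hypothesis Hcc : cube_complex no ni p d.
Variable c : nat.
Hypothesis Hconc : inner_concentrated no ni p d c.

Lemma Rg_tot i j a b : Rg i j a b -> (i + j <= a + b)%N.
Proof. by rewrite /Rg => /andP [/andP [h1 h2] /negP h3]; case: (ltnP (a + b) (i + j)) => // h; exfalso; apply: h3; apply/andP; split; apply/eqP; lia. Qed.

Lemma DIAG s hi n a :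
  (hi <= s)%N -> (n <= hi.+1)%N ->
  (forall k, (k < n)%N -> (hi - k)%N != c) ->
  (forall k, (k < n)%N -> p (s - hi + k)%N (hi - k)%N (d a) = 0 /\ p (s - hi + k)%N (hi - k)%N.+1 (d a) = 0) ->
  (forall a' b', (a' + b' < s)%N -> p a' b' a = 0) ->
  ((hi < s)%N -> p (s - hi)%N.-1 hi.+1 a = 0) ->
  exists t, [/\ forall k, (k < n)%N -> p (s - hi + k)%N (hi - k)%N (a - d t) = 0,
    supp p (fun a' b' => (s <= a' + b'.+1)%N && (s - hi <= a')%N && (b' <= hi)%N && (hi <= b' + n)%N) t &
    supp p (fun a' b' => (s <= a' + b')%N && (s - hi <= a')%N) (d t)].
Proof.
move=> hs hn Hc Hd Hs Htop.
have HC : forall k, (k < n)%N -> forall a' b', (a' <= s - hi + k)%N -> (b' <= (hi - k).+1)%N ->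
     ~~ ((a' == (s - hi + k)%N) && (b' == (hi - k)%N)) -> ~~ ((a' == (s - hi + k)%N) && (b' == (hi - k)%N.+1)) ->
     (exists2 m, (m < k)%N & ((s - hi + m)%N == a') && ((hi - m)%N == b')) \/
     (p a' b' a = 0 /\ forall m, (m < k)%N -> ~~ Rg (s - hi + m)%N (hi - m)%N a' b').
  move=> k hk a' b' h1 h2 h3 h4.
  case: (ltnP (a' + b') s) => hab.
    right; split; first exact: Hs.
    by move=> m hm; apply/negP => /Rg_tot; lia.
  have [ea|ea] : (a' = s - hi + k)%N \/ (a' = s - hi + k - 1 /\ b' = hi - k + 1)%N.
  + case: (ltnP a' (s - hi + k)) => ha; last by left; lia.
    by right; lia.
  + exfalso; move/negP: h3; apply; apply/andP; split; apply/eqP; lia.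
  + case: (posnP k) => hk0.
      right; split; last by move=> m; lia.
      case: ea => e1 e2; rewrite e1 e2.
      have -> : (s - hi + k - 1 = (s - hi).-1)%N by lia.
      have -> : (hi - k + 1 = hi.+1)%N by lia.
      by apply: Htop; lia.
    left; exists k.-1; first lia.
    by case: ea => e1 e2; apply/andP; split; apply/eqP; lia.
have HD : forall m k, (m < k)%N -> (k < n)%N -> ~~ Rg (s - hi + k)%N (hi - k)%N (s - hi + m)%N (hi - m)%N.
  move=> m k hm hk; rewrite /Rg; apply/negP => /andP [/andP [h1 _] _]; lia.
have [t [T1 T2 T3 _]] := ITER Hcc Hconc (n := n) (pi := fun k => (s - hi + k)%N) (pj := fun k => (hi - k)%N) (a := a) Hc Hd HC HD.
exists t; split => //.
- apply: T2 => k hk a' b' /orP [] /andP [/eqP e1 /eqP e2]; apply/andP; split;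
    try (apply/andP; split); try (apply/andP; split); lia.
- apply: T3 => k hk a' b' h.
  have := Rg_tot h; move: h; rewrite /Rg => /andP [/andP [h1 h2] h3] h4.
  by apply/andP; split; lia.
Qed.

Lemma CCOL i lo hi a :
  (forall j, (lo <= j)%N -> (j < hi)%N -> j != c) ->
  ((lo < hi)%N -> forall j, (lo <= j)%N -> (j <= hi)%N -> p i j (d a) = 0) ->
  ((lo < hi)%N -> forall a' b', (a' < i)%N -> (b' <= hi)%N -> p a' b' a = 0) ->
  (forall b', (b' < lo)%N -> p i b' a = 0) ->
  exists t, [/\ forall j, (j < hi)%N -> p i j (a - d t) = 0,
    supp p (fun a' b' => (a' == i) && (lo <= b'.+1)%N && (b' < hi)%N) t &
    supp p (Rg i lo) (d t)].
Proof.
move=> Hc Hd H1 H2.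
have Hc' : forall k, (k < hi - lo)%N -> (lo + k)%N != c by move=> k hk; apply: Hc; lia.
have Hd' : forall k, (k < hi - lo)%N -> p i (lo + k)%N (d a) = 0 /\ p i (lo + k)%N.+1 (d a) = 0.
  by move=> k hk; split; apply: Hd; lia.
have HC : forall k, (k < hi - lo)%N -> forall a' b', (a' <= i)%N -> (b' <= (lo + k).+1)%N ->
     ~~ ((a' == i) && (b' == (lo + k)%N)) -> ~~ ((a' == i) && (b' == (lo + k)%N.+1)) ->
     (exists2 m, (m < k)%N & (i == a') && ((lo + m)%N == b')) \/
     (p a' b' a = 0 /\ forall m, (m < k)%N -> ~~ Rg i (lo + m)%N a' b').
  move=> k hk a' b' h1 h2 h3 h4.
  case: (ltnP a' i) => ha.
    right; split; first by apply: H1; lia.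
    by move=> m hm; rewrite /Rg; apply/negP => /andP [/andP [? _] _]; lia.
  have ea : a' = i by lia.
  have hb : (b' < lo + k)%N.
    case: (ltnP b' (lo + k)) => // hb; exfalso.
    case: (b' =P (lo + k)%N) => e.
      by move/negP: h3; apply; rewrite ea e !eqxx.
    by move/negP: h4; apply; apply/andP; split; apply/eqP; lia.
  case: (ltnP b' lo) => hbl.
    right; split; first by rewrite ea; apply: H2.
    move=> m hm; rewrite /Rg; apply/negP => /andP [/andP [_ h5] h6].
    by move/negP: h6; apply; apply/andP; split; apply/eqP; lia.
  left; exists (b' - lo)%N; first lia.
  by apply/andP; split; apply/eqP; lia.
have HD : forall m k, (m < k)%N -> (k < hi - lo)%N -> ~~ Rg i (lo + k)%N i (lo + m)%N.
  move=> m k hm hk; rewrite /Rg; apply/negP => /andP [/andP [_ h5] h6].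
  by move/negP: h6; apply; apply/andP; split; apply/eqP; lia.
have [t [T1 T2 T3 T4]] := ITER Hcc Hconc (n := (hi - lo)%N) (pi := fun k => i) (pj := fun k => (lo + k)%N) (a := a) Hc' Hd' HC HD.
exists t; split.
- move=> j hj; case: (leqP lo j) => hl.
    by have := T1 (j - lo)%N; rewrite subnKC //; apply; lia.
  rewrite linearB H2 // T4 ?subrr // => k hk; rewrite /Rg.
  apply/negP => /andP [/andP [_ h5] h6].
  by move/negP: h6; apply; apply/andP; split; apply/eqP; lia.
- apply: T2 => k hk a' b' /orP [] /andP [/eqP e1 /eqP e2]; rewrite e1 eqxx /=;
    apply/andP; split; lia.
- apply: T3 => k hk a' b'; rewrite /Rg => /andP [/andP [h1 h2] h3].
  apply/andP; split; first by apply/andP; split; lia.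
  apply/negP => /andP [/eqP e1 /eqP e2]; move/negP: h3; apply.
  by apply/andP; split; apply/eqP; lia.
Qed.

Lemma MCOL i0 m (lo hi : nat -> nat) a :
  (forall i j, (i0 <= i)%N -> (i < i0 + m)%N -> (lo i <= j)%N -> (j < hi i)%N -> j != c) ->
  (forall i j, (i0 <= i)%N -> (i < i0 + m)%N -> (lo i < hi i)%N -> (lo i <= j)%N -> (j <= hi i)%N -> p i j (d a) = 0) ->
  (forall a' b', (a' < i0)%N -> p a' b' a = 0) ->
  (forall i' i b', (i0 <= i')%N -> (i' < i)%N -> (i < i0 + m)%N -> (lo i < hi i)%N ->
     (b' <= hi i)%N -> (b' < hi i')%N || (ni < b')%N) ->
  (forall i j, (i0 <= i)%N -> (i < i0 + m)%N -> (j < lo i)%N -> p i j a = 0) ->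
  (forall i' i, (i0 <= i')%N -> (i' < i)%N -> (i < i0 + m)%N -> (lo i == 0)%N || (lo i < lo i')%N) ->
  exists t, [/\ forall i j, (i0 <= i)%N -> (i < i0 + m)%N -> (j < hi i)%N -> p i j (a - d t) = 0,
    forall a' b', (a' < i0)%N -> p a' b' (a - d t) = 0,
    forall S : nat -> nat -> bool, (forall i a' b', (i0 <= i)%N -> (i < i0 + m)%N ->
       (a' == i) && (lo i <= b'.+1)%N && (b' < hi i)%N -> S a' b') -> supp p S t
  & forall S : nat -> nat -> bool, (forall i a' b', (i0 <= i)%N -> (i < i0 + m)%N ->
       Rg i (lo i) a' b' -> S a' b') -> supp p S (d t)].
Proof.
elim: m => [|m IH] Hc Hd H1 Hmono H2 Hlo.
  exists 0; split.
  - by move=> i j h1 h2; lia.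
  - by move=> a' b' h; rewrite linear0 subr0; apply: H1.
  - by move=> S _; apply: supp0.
  - by move=> S _; rewrite linear0; apply: supp0.
have [t [T1 T2 T3 T4]] : exists t, [/\ forall i j, (i0 <= i)%N -> (i < i0 + m)%N -> (j < hi i)%N -> p i j (a - d t) = 0,
    forall a' b', (a' < i0)%N -> p a' b' (a - d t) = 0,
    forall S : nat -> nat -> bool, (forall i a' b', (i0 <= i)%N -> (i < i0 + m)%N ->
       (a' == i) && (lo i <= b'.+1)%N && (b' < hi i)%N -> S a' b') -> supp p S t
  & forall S : nat -> nat -> bool, (forall i a' b', (i0 <= i)%N -> (i < i0 + m)%N ->
       Rg i (lo i) a' b' -> S a' b') -> supp p S (d t)].
  apply: IH => //.
  - by move=> i j h1 h2; apply: Hc; lia.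
  - by move=> i j h1 h2; apply: Hd; lia.
  - by move=> i' i b' h1 h2 h3; apply: Hmono; lia.
  - by move=> i j h1 h2; apply: H2; lia.
  - by move=> i' i h1 h2 h3; apply: Hlo; lia.
set b := a - d t.
have [i ei] : exists i, i = (i0 + m)%N by eexists.
have Hdb : forall j, p i j (d b) = p i j (d a) by move=> j; rewrite /b linearB (dd Hcc) subr0.
have [t' [U1 U2 U3]] : exists t', [/\ forall j, (j < hi i)%N -> p i j (b - d t') = 0,
    supp p (fun a' b' => (a' == i) && (lo i <= b'.+1)%N && (b' < hi i)%N) t' &
    supp p (Rg i (lo i)) (d t')].
  apply: CCOL.
  - by move=> j h1 h2; apply: (Hc i) => //; lia.
  - by move=> hlh j h1 h2; rewrite Hdb; apply: (Hd i) => //; lia.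
  - move=> hlh a' b' ha hb.
    case: (ltnP a' i0) => ha0; first by apply: T2.
    case/orP: (Hmono a' i b' ha0 ha ltac:(lia) hlh hb) => hb'.
      by apply: T1 => //; lia.
    by apply: (p_out Hcc); rewrite hb' orbT.
  - move=> b' hb'.
    have Hdt : p i b' (d t) = 0.
      have := T4 (fun a' b'' => ~~ ((a' == i) && (b'' < lo i)%N)).
      move=> /(_ _) H; apply: H; last by rewrite negbK eqxx hb'.
      move=> i1 a' b'' h1 h2; rewrite /Rg => /andP [/andP [h3 h4] h5].
      apply/negP => /andP [/eqP e1 h6].
      have := Hlo i1 i h1 ltac:(lia) ltac:(lia); lia.
    by rewrite /b linearB Hdt subr0; apply: H2 => //; lia.
exists (t + t'); split.
- move=> i1 j h1 h2 h3.
  have -> : a - d (t + t') = b - d t' by rewrite /b linearD opprD addrA.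
  case: (ltnP i1 i) => hi1.
    rewrite linearB T1 //; last by lia.
    rewrite U3 ?subrr //; rewrite /Rg; apply/negP => /andP [/andP [h4 _] _]; lia.
  have e : i1 = i by lia.
  by rewrite e; apply: U1; rewrite -e.
- move=> a' b' ha.
  have -> : a - d (t + t') = b - d t' by rewrite /b linearD opprD addrA.
  rewrite linearB T2 // U3 ?subrr //; rewrite /Rg; apply/negP => /andP [/andP [h4 _] _]; lia.
- move=> S HS; apply: suppD.
    by apply: T3 => i1 a' b' h1 h2; apply: HS; lia.
  by apply: supp_mono U2 => a' b' h; apply: (HS i) => //; lia.
- move=> S HS; rewrite linearD; apply: suppD.
    by apply: T4 => i1 a' b' h1 h2; apply: HS; lia.
  by apply: supp_mono U3 => a' b' h; apply: (HS i) => //; lia.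
Qed.

End Loops.

Section Chase.
Variables (R : pzRingType) (V : lmodType R) (no ni : nat).
Variables (p : nat -> nat -> {linear V -> V}) (d : {linear V -> V}).
Hypothesis Hcc : cube_complex no ni p d.
Variable c : nat.
Hypothesis Hconc : inner_concentrated no ni p d c.

Definition wC (i j : nat) := (i + j)%N.
Definition wO (i j : nat) := (i + c)%N.
Definition wG (i j : nat) := (i + minn j c)%N.
Definition FC := FWt p wC.
Definition FO := FWt p wO.
Definition FG := FWt p wG.

Lemma wC_mono : wmono wC. Proof. by rewrite /wmono /wC => *; lia. Qed.
Lemma wO_mono : wmono wO. Proof. by rewrite /wmono /wO => *; lia. Qed.
Lemma wG_mono : wmono wG. Proof. by rewrite /wmono /wG => *; lia. Qed.
Lemma FC_adm : Fadm FC d. Proof. exact: (FWt_adm Hcc wC_mono). Qed.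
Lemma FO_adm : Fadm FO d. Proof. exact: (FWt_adm Hcc wO_mono). Qed.
Lemma FG_adm : Fadm FG d. Proof. exact: (FWt_adm Hcc wG_mono). Qed.

Lemma FWtP w n x : FWt p w n x <-> (forall i j, (w i j < n)%N -> p i j x = 0).
Proof. by split => H i j h; apply: H; lia. Qed.

Lemma FWt0 w n x i j : FWt p w n x -> (w i j < n)%N -> p i j x = 0.
Proof. by move/FWtP => H; apply: H. Qed.

Lemma comp_d_single i j x :
  (forall a b, (a <= i)%N -> (b <= j)%N -> ~~ ((a == i) && (b == j)) -> p a b x = 0) ->
  p i j (d x) = p i j (d (p i j x)).
Proof.
move=> H; apply: (comp_d_box Hcc) => a b ha hb; rewrite (pp_ Hcc).
case: ifP => [/andP [/eqP -> /eqP ->] //|/negbT h]; exact: H.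
Qed.

Lemma p_dd i j x : p i j (d (d x)) = 0. Proof. by rewrite (dd Hcc) linear0. Qed.

Lemma S_GC s y : Zs FC d s (s + 2) y -> exists2 x, Zs FG d s (s + 2) x & Ns FC d 2 s (y - x).
Proof.
move=> [Fy Fdy]; move/FWtP: Fy => Fy; move/FWtP: Fdy => Fdy.
rewrite /wC in Fy Fdy.
have [t1 [T1 T1s T1d]] := DIAG Hcc Hconc (s := s) (hi := s) (n := (s - c)%N) (a := y)
  (leqnn s) ltac:(lia) ltac:(by move=> k hk; apply/eqP; lia)
  ltac:(by move=> k hk; split; apply: Fdy; lia) Fy ltac:(by move=> h; lia).
set y1 := y - d t1.
have Ft1 : FC (s - 1) t1 by apply/FWtP => i j h; apply: T1s; rewrite /wC in h; lia.
have Fdt1 : FC s (d t1) by apply/FWtP => i j h; apply: T1d; rewrite /wC in h; lia.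
have Fy1 : forall i j, (i + j < s)%N -> p i j y1 = 0.
  by move=> i j h; rewrite /y1 linearB Fy // (FWt0 Fdt1) ?subrr /wC.
have Ky1 : forall i j, (i + j = s)%N -> (i + c < s)%N -> p i j y1 = 0.
  by move=> i j h1 h2; have := T1 i ltac:(lia); rewrite subnn add0n; have -> : (s - i = j)%N by lia.
have Fdy1 : forall i j, (i + j < s + 2)%N -> p i j (d y1) = 0.
  by move=> i j h; rewrite /y1 !linearB p_dd subr0; apply: Fdy.
set w := PS no ni p (fun i j => (i + c < s)%N) y1.
have pw : forall i j, p i j w = if (i + c < s)%N then p i j y1 else 0 by move=> i j; exact: (p_PS Hcc).
have Fw : forall i j, (i + j < s + 1)%N -> p i j w = 0.
  move=> i j h; rewrite pw; case: ifP => // h2.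
  case: (ltnP (i + j) s) => h3; first exact: Fy1.
  by apply: Ky1 => //; lia.
have Fdw : forall i j, (i + j < s + 2)%N -> p i j (d w) = 0.
  move=> i j h; case: (ltnP (i + j) (s + 1)) => h1.
    apply: (supp_d Hcc (S := fun a b => (s + 1 <= a + b)%N) (S' := fun a b => (s + 1 <= a + b)%N)); first by move=> a b /negP h2; apply: Fw; lia.
      by move=> a b i' j' *; lia.
    by apply/negP; lia.
  rewrite comp_d_single; last by move=> a b ha hb hne; apply: Fw; apply/negP => h4;
    move/negP: hne; apply; apply/andP; split; apply/eqP; lia.
  rewrite pw; case: ifP => h2; last by rewrite !linear0.
  rewrite -comp_d_single ?Fdy1 //.
  move=> a b ha hb hne; case: (ltnP (a + b) s) => h3; first exact: Fy1.
  by apply: Ky1; lia.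
set y2 := y1 - w.
have py2 : forall i j, p i j y2 = if (i + c < s)%N then 0 else p i j y1.
  by move=> i j; rewrite /y2 linearB pw; case: ifP; rewrite ?subrr ?subr0.
have FGy2 : FG s y2.
  apply/FWtP => i j; rewrite /wG py2 => h; case: ifP => // h2.
  by apply: Fy1; lia.
have Fdy2 : forall i j, (i + j < s + 2)%N -> p i j (d y2) = 0.
  by move=> i j h; rewrite /y2 !linearB p_dd subr0 Fdw // Fdy // subrr.
have FOy2 : FO s y2 by apply/FWtP => i j; rewrite /wO => h; rewrite py2; case: ifP => // h2; lia.
have FOdy2 : FO s (d y2) by case: FO_adm => _ _ _ _ H; apply: H.
have [t3 [T3a T3b T3s T3d]] := MCOL Hcc Hconc (i0 := (s - c)%N) (m := ((s + 2 - c) - (s - c))%N)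
  (lo := fun i => (s + 2 - i)%N) (hi := fun _ => ni.+1) (a := d y2)
  ltac:(by move=> i j *; apply/eqP; lia)
  ltac:(by move=> *; apply: p_dd)
  ltac:(by move=> a' b' h; apply: (FWt0 FOdy2); rewrite /wO; lia)
  ltac:(by move=> *; lia)
  ltac:(by move=> i j *; apply: Fdy2; lia)
  ltac:(by move=> *; lia).
set y3 := y2 - t3.
have Ht3 : forall i j, ~~ ((s - c <= i)%N && (i < s + 2 - c)%N && (s + 1 <= i + j)%N) -> p i j t3 = 0.
  apply: T3s => i a' b' h1 h2 /andP [/andP [/eqP e h3] h4]; apply/andP; split; [apply/andP; split|]; lia.
have Hdt3 : forall i j, (i + j < s + 2)%N -> p i j (d t3) = 0.
  move=> i j h; apply: (T3d (fun a b => (s + 2 <= a + b)%N)); last by apply/negP; lia.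
  by move=> i1 a' b' h1 h2 /Rg_tot; lia.
exists y3.
  split.
    apply/FWtP => i j; rewrite /wG => h.
    rewrite /y3 linearB (FWt0 FGy2) ?sub0r; last by rewrite /wG.
    by rewrite Ht3 ?oppr0 //; apply/negP => /andP [/andP [h1 h2] h3]; lia.
  apply/FWtP => i j; rewrite /wG => h.
  have -> : d y3 = d y2 - d t3 by rewrite /y3 linearB.
  case: (ltnP i (s - c)) => hi0; first by apply: T3b.
  case: (ltnP i (s + 2 - c)) => hi1.
    case: (leqP j ni) => hj; first by apply: T3a => //; lia.
    by rewrite (p_out Hcc) // hj orbT.
  by rewrite linearB Fdy2 ?Hdt3 ?subrr //; lia.
exists (w + t3), (d t1); split.
- split.
    apply/FWtP => i j; rewrite /wC => h; rewrite linearD Fw ?Ht3 ?addr0 //; last by lia.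
    by apply/negP => /andP [_ h2]; lia.
  apply/FWtP => i j; rewrite /wC => h; rewrite linearD linearD Fdw ?Hdt3 ?addr0 //; lia.
- split => //; exists t1; split => //.
- by rewrite /y3 /y2 /y1 grp5.
Qed.

Lemma I_GC s x : Zs FG d s (s + 2) x -> Ns FC d 2 s x -> Ns FG d 2 s x.
Proof.
move=> [FGx FGdx] [a [b [[Fa Fda] [Fb [e [Fe de]]] Ex]]].
move/FWtP: Fa => Fa; move/FWtP: Fda => Fda; move/FWtP: Fb => Fb; move/FWtP: Fe => Fe.
move/FWtP: FGx => FGx'; move/FWtP: FGdx => FGdx'.
rewrite /wC in Fa Fda Fb Fe; rewrite /wG in FGx' FGdx'.
have de0 : forall i j, (i + c < s)%N -> (i + j = s)%N -> p i j (d e) = 0.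
  move=> i j h1 h2; have Eb : b = x - a by rewrite Ex addrC addKr.
  rewrite de Eb linearB Fa ?FGx' ?subrr //; lia.
have [t1 [T1 T1s T1d]] := DIAG Hcc Hconc (s := (s - 1)%N) (hi := (s - 1)%N) (n := (s - 1 - c)%N) (a := e)
  (leqnn _) ltac:(lia) ltac:(by move=> k hk; apply/eqP; lia)
  ltac:(by move=> k hk; split; [rewrite de; apply: Fb; lia | apply: de0; lia])
  ltac:(by move=> a' b' h; apply: Fe; lia) ltac:(by move=> h; lia).
have [e1 He1] : exists e1, e1 = e - d t1 by eexists.
have de1 : d e1 = d e by rewrite He1 linearB (dd Hcc) subr0.
have Fe1 : forall i j, (i + j < s - 1)%N -> p i j e1 = 0.
  move=> i j h; rewrite He1 linearB Fe; last by lia.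
  by rewrite T1d ?subrr //; apply/negP => /andP [h1 _]; lia.
have Ke1 : forall i j, (i + j = s - 1)%N -> (i + c < s - 1)%N -> p i j e1 = 0.
  by move=> i j h1 h2; have := T1 i ltac:(lia); rewrite subnn add0n He1; have -> : (s - 1 - i = j)%N by lia.
have [w Hw] : exists w, w = PS no ni p (fun i j => (i + c < s - 1)%N) e1 by eexists.
have pw : forall i j, p i j w = if (i + c < s - 1)%N then p i j e1 else 0 by move=> i j; rewrite Hw; exact: (p_PS Hcc).
have Fw : forall i j, (i + j < s)%N -> p i j w = 0.
  move=> i j h; rewrite pw; case: ifP => // h2.
  case: (ltnP (i + j) (s - 1)) => h3; first exact: Fe1.
  by apply: Ke1 => //; lia.
have Fdw : forall i j, (i + j < s + 1)%N -> p i j (d w) = 0.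
  move=> i j h; case: (ltnP (i + j) s) => h1.
    apply: (supp_d Hcc (S := fun a b => (s <= a + b)%N) (S' := fun a b => (s <= a + b)%N)).
    - by move=> a' b' /negP h2; apply: Fw; lia.
    - by move=> *; lia.
    - by apply/negP; lia.
  rewrite comp_d_single; last by move=> a' b' ha hb hne; apply: Fw; apply/negP => h4;
    move/negP: hne; apply; apply/andP; split; apply/eqP; lia.
  rewrite pw; case: ifP => h2; last by rewrite !linear0.
  rewrite -comp_d_single ?de1 ?de0 //; try lia.
  move=> a' b' ha hb hne; case: (ltnP (a' + b') (s - 1)) => h3; first exact: Fe1.
  by apply: Ke1; lia.
have [e2 He2] : exists e2, e2 = e1 - w by eexists.
have [a2 Ha2] : exists a2, a2 = a + d w by eexists.
have pe2 : forall i j, p i j e2 = if (i + c < s - 1)%N then 0 else p i j e1.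
  by move=> i j; rewrite He2 linearB pw; case: ifP; rewrite ?subrr ?subr0.
have FGe2 : FG (s - 1) e2.
  apply/FWtP => i j; rewrite /wG pe2 => h; case: ifP => // h2.
  by apply: Fe1; lia.
have FOe2 : FO (s - 1) e2 by apply/FWtP => i j; rewrite /wO => h; rewrite pe2; case: ifP => // h2; lia.
have FOde2 : FO (s - 1) (d e2) by case: FO_adm => _ _ _ _ H; apply: H.
have Ex2 : x = a2 + d e2 by rewrite Ha2 He2 linearB grp6 de1 de -Ex.
have da2 : d a2 = d x by rewrite Ex2 linearD (dd Hcc) addr0.
have Fa2 : forall i j, (i + j < s + 1)%N -> p i j a2 = 0.
  by move=> i j h; rewrite Ha2 linearD Fa ?Fdw ?addr0 //; lia.
have Ea2 : a2 = x - d e2 by rewrite Ex2 addrK.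
have [t3 [T3a T3b T3s T3d]] := MCOL Hcc Hconc (i0 := (s - 1 - c)%N) (m := ((s + 1 - c) - (s - 1 - c))%N)
  (lo := fun i => (s + 1 - i)%N) (hi := fun _ => ni.+1) (a := a2)
  ltac:(by move=> i j *; apply/eqP; lia)
  ltac:(by move=> i j *; rewrite da2; apply: FGdx'; lia)
  ltac:(by move=> a' b' h; rewrite Ea2 linearB FGx' ?(FWt0 FOde2) ?subrr // /wO; lia)
  ltac:(by move=> *; lia)
  ltac:(by move=> i j *; apply: Fa2; lia)
  ltac:(by move=> *; lia).
have [a3 Ha3] : exists a3, a3 = a2 - d t3 by eexists.
have [e3 He3] : exists e3, e3 = e2 + t3 by eexists.
have Ex3 : x = a3 + d e3 by rewrite Ha3 He3 linearD (addrC (d e2)) subrKA -Ex2.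
have Ht3 : forall i j, ~~ ((s - 1 - c <= i)%N && (i < s + 1 - c)%N && (s <= i + j)%N) -> p i j t3 = 0.
  apply: T3s => i a' b' h1 h2 /andP [/andP [/eqP e' h3] h4]; apply/andP; split; [apply/andP; split|]; lia.
have Hdt3 : forall i j, (i + j < s + 1)%N -> p i j (d t3) = 0.
  move=> i j h; apply: (T3d (fun a b => (s + 1 <= a + b)%N)); last by apply/negP; lia.
  by move=> i1 a' b' h1 h2 /Rg_tot; lia.
have FGa3 : FG s.+1 a3.
  apply/FWtP => i j; rewrite /wG Ha3 => h.
  case: (ltnP i (s - 1 - c)) => hi0; first by apply: T3b.
  case: (ltnP i (s + 1 - c)) => hi1.
    case: (leqP j ni) => hj; first by apply: T3a => //; lia.
    by rewrite (p_out Hcc) // hj orbT.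
  by rewrite linearB Fa2 ?Hdt3 ?subrr //; lia.
have FGda3 : FG (s + 2) (d a3).
  by apply/FWtP => i j h; rewrite Ha3 linearB (dd Hcc) subr0 da2; apply: FGdx'.
exists a3, (d e3); split; [by split | split | exact: Ex3].
- have -> : d e3 = x - a3 by rewrite Ex3 addrC addKr.
  apply/FWtP => i j; rewrite /wG => h; rewrite linearB FGx' ?(FWt0 FGa3) ?subrr // /wG; lia.
- exists e3; split => //.
  have -> : (s.+1 - 2 = s - 1)%N by lia.
  apply/FWtP => i j; rewrite /wG => h; rewrite He3 linearD (FWt0 FGe2) ?add0r; last by rewrite /wG.
  by rewrite Ht3 //; apply/negP => /andP [/andP [h1 h2] h3]; lia.
Qed.

Lemma LK s a : FG s a -> FG (s + 2) (d a) ->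
  (forall i j, (c <= j)%N -> (i + c = s)%N -> p i j a = 0) ->
  exists t, [/\ FG (s - 1) t, FO s.+1 t, FG s (d t) & FG s.+1 (a - d t)].
Proof.
move=> /FWtP Fa /FWtP Fda Ha; rewrite /wG in Fa Fda.
case: (posnP c) => c0.
  exists 0; split; try (by rewrite ?linear0; apply: supp0).
  apply/FWtP => i j; rewrite /wG linear0 subr0 => h.
  case: (ltnP (i + minn j c) s) => h1; first by apply: Fa.
  by apply: Ha; lia.
have [t [T1 Ts Td]] := DIAG Hcc Hconc (s := s) (hi := (minn c s.+1).-1) (n := minn c s.+1) (a := a)
  ltac:(lia) ltac:(lia) ltac:(by move=> k hk; apply/eqP; lia)
  ltac:(by move=> k hk; split; apply: Fda; lia)
  ltac:(by move=> a' b' h; apply: Fa; lia)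
  ltac:(by move=> h; apply: Ha; lia).
exists t; split.
- apply/FWtP => i j; rewrite /wG => h; apply: Ts; apply/negP => /andP [/andP [/andP [h1 h2] h3] h4]; lia.
- apply/FWtP => i j; rewrite /wO => h; apply: Ts; apply/negP => /andP [/andP [/andP [h1 h2] h3] h4]; lia.
- apply/FWtP => i j; rewrite /wG => h; apply: Td; apply/negP => /andP [h1 h2]; lia.
- apply/FWtP => i j; rewrite /wG => h.
  case: (ltnP (i + minn j c) s) => h1.
    rewrite linearB Fa // Td ?subrr //; apply/negP => /andP [h2 h3]; lia.
  case: (leqP c j) => hj.
    rewrite linearB (Ha i j hj); last by lia.
    rewrite Td ?subrr //; apply/negP => /andP [h2 h3]; lia.
  have := T1 ((minn c s.+1).-1 - j)%N ltac:(lia).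
  have E1 : (s - (minn c s.+1).-1 + ((minn c s.+1).-1 - j) = i)%N by lia.
  have E2 : ((minn c s.+1).-1 - ((minn c s.+1).-1 - j) = j)%N by lia.
  by rewrite E1 E2.
Qed.

Lemma S_GO s y : Zs FO d s (s + 2) y -> exists2 x, Zs FG d s (s + 2) x & Ns FO d 2 s (y - x).
Proof.
move=> [Fy Fdy].
case: (ltnP s c) => sc.
  exists 0; first by split; rewrite ?linear0; apply: supp0.
  rewrite subr0; apply: (ZsNs_Z FO_adm); split => //.
  by apply/FWtP => i j; rewrite /wO; lia.
have Fy' := proj1 (FWtP _ _ _) Fy; have Fdy' := proj1 (FWtP _ _ _) Fdy; rewrite /wO in Fy' Fdy'.
have [t1 [T1a T1b T1s T1d]] := MCOL Hcc Hconc (i0 := (s - c)%N) (m := 2)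
  (lo := fun i => 0%N) (hi := fun i => (s - i)%N) (a := y)
  ltac:(by move=> i j *; apply/eqP; lia)
  ltac:(by move=> i j *; apply: Fdy'; lia)
  ltac:(by move=> a' b' h; apply: Fy'; lia)
  ltac:(by move=> *; apply/orP; left; lia)
  ltac:(by move=> *; lia)
  ltac:(by move=> *; lia).
have Ft1 : FO s t1.
  apply/FWtP => i j; rewrite /wO => h; apply: (T1s (fun a b => (s <= a + c)%N)); last by apply/negP; lia.
  by move=> i1 a' b' h1 h2 /andP [/andP [/eqP e _] _]; lia.
have Fdt1 : FO s (d t1) by case: FO_adm => _ _ _ _ H; apply: H.
have [y1 Hy1] : exists y1, y1 = y - d t1 by eexists.
have [x0 Hx0] : exists x0, x0 = PS no ni p (fun i j => (i + c < s + 2)%N) y1 by eexists.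
have px0 : forall i j, p i j x0 = if (i + c < s + 2)%N then p i j y1 else 0.
  by move=> i j; rewrite Hx0; exact: (p_PS Hcc).
have [sr Hsr] : exists sr, sr = y1 - x0 by eexists.
have psr : forall i j, p i j sr = if (i + c < s + 2)%N then 0 else p i j y1.
  by move=> i j; rewrite Hsr linearB px0; case: ifP; rewrite ?subrr ?subr0.
have FGx0 : FG s x0.
  apply/FWtP => i j; rewrite /wG px0 => h; case: ifP => // h2.
  rewrite Hy1; case: (ltnP i (s - c)) => h3; first by apply: T1b.
  by apply: T1a; lia.
have Fsr : FO (s + 2) sr by apply/FWtP => i j; rewrite /wO psr => h; case: ifP => //; lia.
have Fdsr : FO (s + 2) (d sr) by case: FO_adm => _ _ _ _ H; apply: H.
have [e He] : exists e, e = d x0 by eexists.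
have Ex0 : x0 = y1 - sr by rewrite Hsr subKr.
have Ee : e = d y - d sr by rewrite He Ex0 Hy1 !linearB (dd Hcc) subr0.
have FOe : FO (s + 2) e by rewrite Ee; apply: (FB FO_adm).
have FGe : FG s.+1 e.
  apply/FWtP => i j; rewrite /wG => h.
  case: (ltnP (i + c) (s + 2)) => h1; first by apply: (FWt0 FOe); rewrite /wO.
  rewrite He; apply: (supp_d Hcc (S := fun a b => (a + c < s + 2)%N && (s <= a + minn b c)%N)
     (S' := fun a b => (a + c < s + 2)%N || (s + 1 <= a + minn b c)%N)).
  - move=> a b; rewrite negb_and => /orP [] h2.
      by rewrite px0 (negbTE h2).
    by apply: (FWt0 FGx0); rewrite /wG; lia.
  - by move=> a b i' j' /andP [h2 h3] h4 h5; apply/orP; lia.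
  - by apply/negP => /orP []; lia.
have [t [Ft Ft' Fdt Fet]] := LK (s := s.+1) (a := e) FGe
  ltac:(by rewrite He (dd Hcc); apply: supp0)
  ltac:(by move=> i j h1 h2; apply: (FWt0 FOe); rewrite /wO; lia).
exists (x0 - t).
  split; first by apply: (FB FG_adm) => //; move: Ft; have -> : (s.+1 - 1 = s)%N by lia.
  by rewrite linearB -He; move: Fet; apply: (Fmono FG_adm); lia.
exists (sr + t), (d t1); split.
- split.
    apply: (FD FO_adm); first by apply: (Fmono FO_adm (n := (s + 2)%N)) => //; lia.
    by apply: (Fmono FO_adm (n := s.+2)) => //; lia.
  rewrite linearD; apply: (FD FO_adm) => //; case: FO_adm => _ _ _ _ H; apply: H.
  by apply: (Fmono FO_adm (n := s.+2)) => //; lia.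
- split => //; exists t1; split => //.
  by apply: (Fmono FO_adm (n := s)) => //; lia.
- have -> : x0 - t = y - d t1 - sr - t by rewrite Ex0 Hy1.
  by rewrite grp5.
Qed.

Lemma I_GO s x : Zs FG d s (s + 2) x -> Ns FO d 2 s x -> Ns FG d 2 s x.
Proof.
move=> [FGx FGdx] [a [b [[Fa Fda] [Fb [e [Fe de]]] Ex]]].
have Eb : b = x - a by rewrite Ex addrC addKr.
have Fa' := proj1 (FWtP _ _ _) Fa; have Fe' := proj1 (FWtP _ _ _) Fe; have FGx' := proj1 (FWtP _ _ _) FGx.
rewrite /wO in Fa' Fe'; rewrite /wG in FGx'.
have [t1 [T1a T1b T1s T1d]] := MCOL Hcc Hconc (i0 := (s - 1 - c)%N) (m := ((s + 1 - c) - (s - 1 - c))%N)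
  (lo := fun i => 0%N) (hi := fun i => (s - 1 - i)%N) (a := e)
  ltac:(by move=> i j *; apply/eqP; lia)
  ltac:(by move=> i j *; rewrite de Eb linearB FGx' ?Fa' ?subrr //; lia)
  ltac:(by move=> a' b' h; apply: Fe'; lia)
  ltac:(by move=> *; apply/orP; left; lia)
  ltac:(by move=> *; lia)
  ltac:(by move=> *; lia).
have [e1 He1] : exists e1, e1 = e - d t1 by eexists.
have de1 : d e1 = b by rewrite He1 linearB (dd Hcc) subr0.
have Fe1 : FO (s - 1) e1.
  rewrite He1; apply: (FB FO_adm); first by apply/FWtP.
  case: FO_adm => _ _ _ _ H; apply: H.
  apply/FWtP => i j; rewrite /wO => h; apply: (T1s (fun a b => (s - 1 <= a + c)%N)); last by apply/negP; lia.
  by move=> i1 a' b' h1 h2 /andP [/andP [/eqP e' _] _]; lia.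
have [e' He'] : exists e', e' = PS no ni p (fun i j => (i + c <= s)%N) e1 by eexists.
have pe' : forall i j, p i j e' = if (i + c <= s)%N then p i j e1 else 0.
  by move=> i j; rewrite He'; exact: (p_PS Hcc).
have FGe' : FG (s - 1) e'.
  apply/FWtP => i j; rewrite /wG pe' => h; case: ifP => // h2.
  case: (ltnP (i + c) (s - 1)) => h3; first by apply: (FWt0 Fe1); rewrite /wO.
  by rewrite He1; apply: T1a; lia.
have [r Hr] : exists r, r = e1 - e' by eexists.
have Fr : FO s.+1 r.
  by apply/FWtP => i j; rewrite /wO => h; rewrite Hr linearB pe'; case: ifP; rewrite ?subrr //; lia.
have Fdr : FO s.+1 (d r) by case: FO_adm => _ _ _ _ H; apply: H.
have [a' Ha'] : exists a', a' = x - d e' by eexists.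
have Ea' : a' = a + d r by rewrite Ha' Hr linearB de1 addrA -Ex.
have FOa' : FO s.+1 a' by rewrite Ea'; apply: (FD FO_adm).
have FGa' : FG s a'.
  apply/FWtP => i j; rewrite /wG => h.
  case: (ltnP (i + c) s.+1) => h1; first by apply: (FWt0 FOa'); rewrite /wO.
  rewrite Ha' linearB FGx' // sub0r.
  rewrite (supp_d Hcc (S := fun a b => (a + c <= s)%N && (s - 1 <= a + minn b c)%N)
     (S' := fun a b => (a + c <= s)%N || (s <= a + minn b c)%N)) ?oppr0 //.
  - move=> a0 b0; rewrite negb_and => /orP [] h2.
      by rewrite pe' (negbTE h2).
    by apply: (FWt0 FGe'); rewrite /wG; lia.
  - by move=> a0 b0 i' j' /andP [h2 h3] h4 h5; apply/orP; lia.
  - by apply/negP => /orP []; lia.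
have da' : d a' = d x by rewrite Ha' linearB (dd Hcc) subr0.
have [t [Ft Ft' Fdt Fat]] := LK (s := s) (a := a') FGa'
  ltac:(by rewrite da')
  ltac:(by move=> i j h1 h2; apply: (FWt0 FOa'); rewrite /wO; lia).
exists (a' - d t), (d (e' + t)); split.
- split => //. by rewrite linearB (dd Hcc) subr0 da'.
- split.
    have -> : d (e' + t) = x - a' + d t by rewrite linearD Ha' subKr.
    apply: (FD FG_adm) => //; apply: (FB FG_adm) => //.
  exists (e' + t); split => //.
  by apply: (Fmono FG_adm (n := (s - 1)%N)); [lia | apply: (FD FG_adm)].
- by rewrite linearD (addrC (d e')) addrA subrK Ha' subrK.
Qed.

End Chase.

Section Ek.
Variables (R : pzRingType) (V : lmodType R) (no ni : nat).
Variables (p : nat -> nat -> {linear V -> V}) (d : {linear V -> V}).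
Hypothesis Hcc : cube_complex no ni p d.
Variable c : nat.
Hypothesis Hconc : inner_concentrated no ni p d c.

Let FC := FC p.
Let FO := FO p c.
Let FG := FG p c.

Lemma id_GC : fmap FG FC d d id.
Proof.
split => // n x /FWtP H; apply/FWtP => i j h; apply: H; rewrite /wG /wC in h *; lia.
Qed.
Lemma id_GO : fmap FG FO d d id.
Proof.
split => // n x /FWtP H; apply/FWtP => i j h; apply: H; rewrite /wG /wO in h *; lia.
Qed.

Lemma SI_GC k : (2 <= k)%N -> forall s, SI FG FC d d id k s.
Proof.
elim: k => [//|k IH] hk s.
case: (ltnP 1 k) => hk1.
  have := SI_step (FG_adm Hcc c) (FC_adm Hcc) (dd Hcc) (dd Hcc) id_GC (r := k) ltac:(lia).
  have -> : k.+1 = (k + 1)%N by lia.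
  by apply => s'; apply: IH.
have -> : k = 1%N by lia.
split.
- exact: (phiZs id_GC).
- exact: (phiNs id_GC).
- by move=> y Zy; have [x Zx Nx] := S_GC Hcc Hconc Zy; exists x.
- by move=> x Zx Nx; apply: (I_GC Hcc Hconc).
Qed.

Lemma SI_GO k : (2 <= k)%N -> forall s, SI FG FO d d id k s.
Proof.
elim: k => [//|k IH] hk s.
case: (ltnP 1 k) => hk1.
  have := SI_step (FG_adm Hcc c) (FO_adm Hcc c) (dd Hcc) (dd Hcc) id_GO (r := k) ltac:(lia).
  have -> : k.+1 = (k + 1)%N by lia.
  by apply => s'; apply: IH.
have -> : k = 1%N by lia.
split.
- exact: (phiZs id_GO).
- exact: (phiNs id_GO).
- by move=> y Zy; have [x Zx Nx] := S_GO Hcc Hconc Zy; exists x.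
- by move=> x Zx Nx; apply: (I_GO Hcc Hconc).
Qed.

End Ek.

Lemma pred_ext2 (A B : Type) (P Q : A -> B -> Prop) : (forall a b, P a b <-> Q a b) -> P = Q.
Proof.
move=> H; apply: functional_extensionality => a; apply: functional_extensionality => b.
by apply: propositional_extensionality.
Qed.
Lemma pred_ext1 (A : Type) (P Q : A -> Prop) : (forall a, P a <-> Q a) -> P = Q.
Proof.
move=> H; apply: functional_extensionality => a; by apply: propositional_extensionality.
Qed.

Lemma SSN_eq (R : pzRingType) (V : lmodType R) (F : nat -> V -> Prop) (d : {linear V -> V}) r p :
  (0 < r)%N -> SSN F d r p = Ns F d r p.
Proof. by move=> r0; apply: pred_ext1 => y; apply: SSN_Ns. Qed.

Lemma iso_ext (R : pzRingType) (V W : lmodType R) (phi : V -> W) Z N Z' N' Z2 N2 Z2' N2' :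
  iso_lin phi Z N Z' N' -> Z = Z2 -> N = N2 -> Z' = Z2' -> N' = N2' -> iso_lin phi Z2 N2 Z2' N2'.
Proof. by move=> H <- <- <- <-. Qed.

Section Shift.
Variables (R : pzRingType) (V : lmodType R) (F G : nat -> V -> Prop) (d : {linear V -> V}) (c : nat).
Hypothesis HFG : forall n x, F n x <-> G (n - c)%N x.

Lemma Zs_shift q k : Zs F d (q + c) (q + c + k) = Zs G d q (q + k).
Proof.
apply: pred_ext1 => x; rewrite /Zs !HFG.
have -> : (q + c - c = q)%N by lia.
by have -> : (q + c + k - c = q + k)%N by lia.
Qed.

Lemma Ns_shift q k : Ns F d k (q + c) = Ns G d k q.
Proof.
apply: pred_ext1 => y; rewrite /Ns /Zs.
have E1 : forall x, F (q + c).+1 x <-> G q.+1 x by move=> x; rewrite HFG; have -> : ((q + c).+1 - c = q.+1)%N by lia.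
have E2 : forall x, F (q + c + k) x <-> G (q + k) x by move=> x; rewrite HFG; have -> : (q + c + k - c = q + k)%N by lia.
have E3 : forall x, F (q + c) x <-> G q x by move=> x; rewrite HFG; have -> : (q + c - c = q)%N by lia.
have E4 : forall x, F ((q + c).+1 - k) x <-> G (q.+1 - k) x.
  by move=> x; rewrite HFG; have -> : ((q + c).+1 - k - c = q.+1 - k)%N by lia.
split.
- move=> [a [b [[H1 H2] [H3 [e [H4 H5]]] H6]]]; exists a, b; split => //.
  + by split; [apply/E1 | apply/E2].
  + by split; [apply/E3 | exists e; split => //; apply/E4].
- move=> [a [b [[H1 H2] [H3 [e [H4 H5]]] H6]]]; exists a, b; split => //.
  + by split; [apply/E1 | apply/E2].
  + by split; [apply/E3 | exists e; split => //; apply/E4].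
Qed.
End Shift.

Unset Implicit Arguments.

Theorem theorem3p1 (R : pzRingType) (Va Vb : lmodType R) (no ni : nat)
    (pa : nat -> nat -> {linear Va -> Va}) (da : {linear Va -> Va})
    (pb : nat -> nat -> {linear Vb -> Vb}) (db : {linear Vb -> Vb})
    (c : nat) :
  ni \in [:: 1%N; 2%N; 6%N] ->
  cube_complex no ni pa da ->
  cube_complex no 0 pb db ->
  filtered_htpy_equiv (Fout pa) da (Fout pb) db ->
  inner_concentrated no ni pa da c ->
  forall k : nat, (2 <= k)%N ->
    (forall q : nat,
       sq_iso (SSZ (Fcube pa) da k (q + c)) (SSN (Fcube pa) da k (q + c))
              (SSZ (Fcube pb) db k q) (SSN (Fcube pb) db k q)) /\
    (forall p : nat, (p < c)%N ->
       sq_zero (SSZ (Fcube pa) da k p) (SSN (Fcube pa) da k p)).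
Proof.
move=> _ Hca Hcb Hhe Hconc k hk.
have eC : Fcube pa = FC pa by apply: pred_ext2 => n x; apply: Fcube_FWt.
have eCb : Fcube pb = Fout pb.
  apply: pred_ext2 => n x; split => H i j h.
    case: (posnP j) => hj; first by apply: H; lia.
    by apply: (p_out Hcb); apply/orP; right; lia.
  by apply: H; lia.
have eOa : Fout pa = FWt pa (fun i j => i) by apply: pred_ext2 => n x; apply: Fout_FWt.
have eOb : Fout pb = FWt pb (fun i j => i) by apply: pred_ext2 => n x; apply: Fout_FWt.
have wm : wmono (fun i j : nat => i) by move=> *; lia.
have AOa : Fadm (Fout pa) da by rewrite eOa; apply: (FWt_adm Hca).
have AOb : Fadm (Fout pb) db by rewrite eOb; apply: (FWt_adm Hcb).
have HFO : forall n x, FO pa c n x <-> Fout pa (n - c)%N x.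
  by move=> n x; rewrite eOa; split => H i j h; apply: H; rewrite /wO in h *; lia.
move: Hhe => [f [g [h [h' [[fd gd] [fF gF] [hF h'F] [gf fg]]]]]].
have Hf : fmap (Fout pa) (Fout pb) da db f.
  by split => //; [move=> *; apply: linearD | move=> *; apply: linearZ].
have Hg : fmap (Fout pb) (Fout pa) db da g.
  by split => //; [move=> *; apply: linearD | move=> *; apply: linearZ].
have SIf : forall q, SI (Fout pa) (Fout pb) da db f k q.
  move=> q; apply: (SI_htpy AOa AOb (dd Hca) (dd Hcb) Hf Hg hF (linear0 h) h'F (linear0 h') gf fg); lia.
have k0 : (0 < k)%N by lia.
split.
- move=> q.
  rewrite eC eCb !SSN_eq //.
  change (sq_iso (Zs (FC pa) da (q + c) (q + c + k)) (Ns (FC pa) da k (q + c))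
                 (Zs (Fout pb) db q (q + k)) (Ns (Fout pb) db k q)).
  have I1 := SI_GC Hca Hconc hk (q + c).
  have I2 := SI_GO Hca Hconc hk (q + c).
  rewrite /SI in I1 I2.
  have I2' : iso_lin id (Zs (FG pa c) da (q + c) (q + c + k)) (Ns (FG pa c) da k (q + c))
                        (Zs (Fout pa) da q (q + k)) (Ns (Fout pa) da k q).
    apply: (iso_ext I2) => //.
    + exact: (Zs_shift da HFO).
    + exact: (Ns_shift da HFO).
  have I3 : iso_lin (fun x => f (id x)) (Zs (FG pa c) da (q + c) (q + c + k)) (Ns (FG pa c) da k (q + c))
                        (Zs (Fout pb) db q (q + k)) (Ns (Fout pb) db k q).
    apply: (iso_comp I2' (SIf q)); first by move=> x y; apply: linearB.
    by move=> x y; apply: (NsD AOb).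
  apply: (sq_from_span I1 I3).
  + by [].
  + by [].
  + by move=> x y; apply: linearB.
  + by move=> a x; apply: linearZ.
  + by move=> x y Hx Hy; apply: (ZsD (FG_adm Hca c)) => //; apply: (ZsN (FG_adm Hca c)).
  + by move=> x y; apply: (ZsD (FG_adm Hca c)).
  + by move=> a x; apply: (ZsZ (FG_adm Hca c)).
  + by move=> x y; apply: (ZsD (FC_adm Hca)).
  + by move=> a x; apply: (ZsZ (FC_adm Hca)).
  + by move=> x y; apply: (NsB (FC_adm Hca)).
  + by move=> a x; apply: (NsZ (FC_adm Hca)).
  + by move=> x; apply: (NsZs (FC_adm Hca) (dd Hca)).
  + by move=> x y; apply: (NsB AOb).
- move=> p0 hp x.
  rewrite eC !SSN_eq //.
  change (Zs (FC pa) da p0 (p0 + k) x -> Ns (FC pa) da k p0 x) => Zx.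
  have I1 := SI_GC Hca Hconc hk p0.
  have I2 := SI_GO Hca Hconc hk p0.
  have [x0 Zx0 Nx0] := isoS I1 Zx.
  have ZOx0 : Zs (FO pa c) da p0 (p0 + k) x0 by case: I2 => H _ _ _; apply: H.
  have NOx0 : Ns (FO pa c) da k p0 x0.
    apply: (ZsNs_Z (FO_adm Hca c)); split; last by case: ZOx0.
    by apply/FWtP => i j; rewrite /wO; lia.
  have NGx0 := isoI I2 Zx0 NOx0.
  have NCx0 : Ns (FC pa) da k p0 x0 by case: I1 => _ H _ _; apply: H.
  by rewrite -(subrK x0 x); apply: (NsD (FC_adm Hca)).
Qed.
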